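(* Let $\{\xi,\xi_1,\xi_2\}$ be an orthonormal basis of $\mathbb{R}^3$ and let $\varrho_\xi:\mathbb{T}^3\to\mathbb{R}$ be a smooth $\mathbb{T}^3$-periodic function of the form $\varrho_\xi(x)=\phi(x\cdot\xi_1,x\cdot\xi_2)$, where $\phi:\mathbb{R}^2\to\mathbb{R}$ is a sum of translates of a single smooth, compactly supported, radially symmetric function, the translates having pairwise disjoint supports. Set $W_\xi=\varrho_\xi\,\xi$ and $\mathcal{C}=\|\nabla\varrho_\xi\|_{L^2(\mathbb{T}^3)}^2$. Then for all $k,\ell\in\{1,2,3\}$, $$\int_{\mathbb{T}^3}\Big(W_\xi^k\,\partial_{mm}W_\xi^\ell+\partial_kW_\xi^j\,\partial_\ell W_\xi^j\Big)dx=\frac{\mathcal{C}}{2}\big(\delta^{k\ell}-3\xi^k\xi^\ell\big),$$ with summation over the repeated indices $m$ and $j$. *)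

(* Defs.v *)
From Stdlib Require Import Reals Lra List.
From Coquelicot Require Import Coquelicot.
Open Scope R_scope.

Definition D1 (g : R -> R -> R) : R -> R -> R := fun x y => Derive (fun t => g t y) x.
Definition D2 (g : R -> R -> R) : R -> R -> R := fun x y => Derive (fun t => g x t) y.

Fixpoint iterD (s : list bool) (g : R -> R -> R) : R -> R -> R :=
  match s with
  | nil => g
  | b :: s' => (if b then D1 else D2) (iterD s' g)
  end.

Definition smooth2 (g : R -> R -> R) : Prop :=
  forall (s : list bool) (x y : R),
    ex_derive (fun t => iterD s g t y) x /\
    ex_derive (fun t => iterD s g x t) y /\
    continuous (fun p : R * R => iterD s g (fst p) (snd p)) (x, y).

Definition compactly_supported2 (g : R -> R -> R) : Prop :=
  exists M : R, forall y1 y2, y1 ^ 2 + y2 ^ 2 > M -> g y1 y2 = 0.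

Definition radial2 (g : R -> R -> R) : Prop :=
  forall y1 y2 z1 z2, y1 ^ 2 + y2 ^ 2 = z1 ^ 2 + z2 ^ 2 -> g y1 y2 = g z1 z2.

Definition translate2 (g : R -> R -> R) (c : R * R) : R -> R -> R :=
  fun y1 y2 => g (y1 - fst c) (y2 - snd c).

(* y lies in the support (closure of the non-vanishing set) of g *)
Definition in_support2 (g : R -> R -> R) (y1 y2 : R) : Prop :=
  forall eps : R, eps > 0 ->
    exists z1 z2, (y1 - z1) ^ 2 + (y2 - z2) ^ 2 < eps ^ 2 /\ g z1 z2 <> 0.

(* Vectors / points of R^3 are represented as nat -> R, only the components
   0,1,2 being relevant (index k in {1,2,3} of the paper is k-1 here). *)

Definition sum3 (f : nat -> R) : R := f 0%nat + f 1%nat + f 2%nat.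

Definition dot3 (v w : nat -> R) : R := sum3 (fun i => v i * w i).

Definition delta (k l : nat) : R := if Nat.eqb k l then 1 else 0.

Definition orthonormal3 (a b c : nat -> R) : Prop :=
  dot3 a a = 1 /\ dot3 b b = 1 /\ dot3 c c = 1 /\
  dot3 a b = 0 /\ dot3 a c = 0 /\ dot3 b c = 0.

Definition vec3 (a b c : R) : nat -> R :=
  fun i => match i with 0%nat => a | 1%nat => b | _ => c end.

Definition upd (x : nat -> R) (m : nat) (t : R) : nat -> R :=
  fun i => if Nat.eqb i m then t else x i.

Definition partial (m : nat) (F : (nat -> R) -> R) : (nat -> R) -> R :=
  fun x => Derive (fun t => F (upd x m t)) (x m).

Definition periodic3 (F : (nat -> R) -> R) : Prop :=
  forall (x : nat -> R) (k : nat), (k < 3)%nat -> F (upd x k (x k + 1)) = F x.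

(* integral over the torus T^3 = R^3 / Z^3, via the fundamental cell [0,1]^3 *)
Definition torus_int (F : (nat -> R) -> R) : R :=
  RInt (fun a => RInt (fun b => RInt (fun c => F (vec3 a b c)) 0 1) 0 1) 0 1.

(* Main.v *)
Require Import Defs.
From Stdlib Require Import Reals Lra Lia List FunctionalExtensionality Classical ClassicalEpsilon.
From Coquelicot Require Import Coquelicot.
Open Scope R_scope.

Definition cont2 (k : R -> R -> R) : Prop :=
  forall x y, continuous (fun z : R * R => k (fst z) (snd z)) (x, y).

Lemma cont2_2d k : cont2 k -> forall x y, continuity_2d_pt k x y.
Proof. intros H x y. apply continuity_2d_pt_filterlim. apply (H x y). Qed.

Lemma cont2_comp k (f g : R -> R) t : cont2 k -> continuous f t -> continuous g t ->
  continuous (fun s => k (f s) (g s)) t.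
Proof.
  intros Hk Hf Hg. apply (continuous_comp_2 f g k t Hf Hg). apply Hk.
Qed.

Lemma cont2_comp2 k (f g : R * R -> R) z : cont2 k -> continuous f z -> continuous g z ->
  continuous (fun s => k (f s) (g s)) z.
Proof.
  intros Hk Hf Hg. apply (continuous_comp_2 f g k z Hf Hg). apply Hk.
Qed.

Lemma cont_fst (z : R * R) : continuous (fun p : R * R => fst p) z.
Proof. destruct z. apply continuous_fst. Qed.
Lemma cont_snd (z : R * R) : continuous (fun p : R * R => snd p) z.
Proof. destruct z. apply continuous_snd. Qed.

Lemma cont_plusR {U : UniformSpace} (f g : U -> R) x :
  continuous f x -> continuous g x -> continuous (fun y => f y + g y) x.
Proof. intros; apply (continuous_plus f g x); auto. Qed.
Lemma cont_multR {U : UniformSpace} (f g : U -> R) x :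
  continuous f x -> continuous g x -> continuous (fun y => f y * g y) x.
Proof. intros; apply (continuous_mult f g x); auto. Qed.
Lemma cont_constR {U : UniformSpace} (c : R) (x : U) : continuous (fun _ => c) x.
Proof. apply continuous_const. Qed.
Lemma cont_idR (x : R) : continuous (fun y : R => y) x.
Proof. apply continuous_id. Qed.

Lemma cont2_plus f g : cont2 f -> cont2 g -> cont2 (fun u v => f u v + g u v).
Proof. intros Hf Hg x y. apply cont_plusR; [apply Hf|apply Hg]. Qed.
Lemma cont2_mult f g : cont2 f -> cont2 g -> cont2 (fun u v => f u v * g u v).
Proof. intros Hf Hg x y. apply cont_multR; [apply Hf|apply Hg]. Qed.
Lemma cont2_const c : cont2 (fun _ _ => c).
Proof. intros x y. apply cont_constR. Qed.
Lemma cont2_fst : cont2 (fun u _ => u).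
Proof. intros x y. apply cont_fst. Qed.
Lemma cont2_snd : cont2 (fun _ v => v).
Proof. intros x y. apply cont_snd. Qed.
Lemma cont2_scal a f : cont2 f -> cont2 (fun u v => a * f u v).
Proof. intros; apply cont2_mult; auto using cont2_const. Qed.
Lemma cont2_opp f : cont2 f -> cont2 (fun u v => - f u v).
Proof. intros H x y. apply (continuous_opp (fun z : R*R => f (fst z) (snd z))). apply H. Qed.
Lemma cont2_minus f g : cont2 f -> cont2 g -> cont2 (fun u v => f u v - g u v).
Proof. intros. unfold Rminus. apply cont2_plus; auto. apply cont2_opp; auto. Qed.
Lemma cont2_ext f g : (forall u v, f u v = g u v) -> cont2 f -> cont2 g.
Proof.
  intros E H. replace g with f; auto.
  apply functional_extensionality; intro u; apply functional_extensionality; intro v; auto.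
Qed.

Lemma cont_line k s1 s2 w1 w2 t : cont2 k ->
  continuous (fun t => k (s1 + t * w1) (s2 + t * w2)) t.
Proof.
  intros Hk. apply cont2_comp; auto.
  - apply cont_plusR. apply cont_constR. apply cont_multR. apply cont_idR. apply cont_constR.
  - apply cont_plusR. apply cont_constR. apply cont_multR. apply cont_idR. apply cont_constR.
Qed.

Definition P (k : R -> R -> R) (w1 w2 : R) : R -> R -> R :=
  fun s1 s2 => RInt (fun t => k (s1 + t * w1) (s2 + t * w2)) 0 1.

Lemma P_ex k w1 w2 s1 s2 : cont2 k -> ex_RInt (fun t => k (s1 + t * w1) (s2 + t * w2)) 0 1.
Proof. intros Hk. apply (ex_RInt_continuous (V := R_CompleteNormedModule)). intros; apply cont_line; auto. Qed.

Lemma RInt_minusR (f g : R -> R) a b : ex_RInt f a b -> ex_RInt g a b ->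
  RInt (fun t => f t - g t) a b = RInt f a b - RInt g a b.
Proof.
  intros Hf Hg. apply is_RInt_unique.
  apply (is_RInt_minus (V := R_NormedModule)); apply (RInt_correct (V := R_CompleteNormedModule)); auto.
Qed.
Lemma RInt_plusR (f g : R -> R) a b : ex_RInt f a b -> ex_RInt g a b ->
  RInt (fun t => f t + g t) a b = RInt f a b + RInt g a b.
Proof.
  intros Hf Hg. apply is_RInt_unique.
  apply (is_RInt_plus (V := R_NormedModule)); apply (RInt_correct (V := R_CompleteNormedModule)); auto.
Qed.
Lemma RInt_scalR (f : R -> R) a b c : ex_RInt f a b ->
  RInt (fun t => c * f t) a b = c * RInt f a b.
Proof.
  intros Hf. apply is_RInt_unique.
  apply (is_RInt_scal (V := R_NormedModule)); apply (RInt_correct (V := R_CompleteNormedModule)); auto.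
Qed.

Lemma P_cont k w1 w2 : cont2 k -> cont2 (P k w1 w2).
Proof.
  intros Hk x y.
  apply (proj1 (continuity_2d_pt_filterlim (P k w1 w2) x y)).
  intros eps.
  set (M := 1 + Rabs w1 + Rabs w2).
  assert (HM : 0 < M) by (unfold M; generalize (Rabs_pos w1) (Rabs_pos w2); lra).
  assert (He2 : 0 < eps / 2) by (generalize (cond_pos eps); lra).
  destruct (uniform_continuity_2d k (x - M) (x + M) (y - M) (y + M)
     (fun x y _ _ => cont2_2d k Hk x y) (mkposreal _ He2)) as [d Hd].
  assert (Hd1 : 0 < Rmin d 1) by (apply Rmin_pos; [apply cond_pos|lra]).
  exists (mkposreal _ Hd1). simpl. intros u v Hu Hv.
  unfold P. rewrite <- RInt_minusR by (apply P_ex; auto).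
  apply Rle_lt_trans with ((1 - 0) * (eps / 2)).
  - apply abs_RInt_le_const. lra.
    apply (ex_RInt_continuous (V := R_CompleteNormedModule)). intros.
    apply (continuous_minus (V := R_NormedModule)); apply cont_line; auto.
    intros t Ht.
    assert (Hu1 : Rabs (u - x) < 1) by (eapply Rlt_le_trans; [apply Hu| apply Rmin_r]).
    assert (Hv1 : Rabs (v - y) < 1) by (eapply Rlt_le_trans; [apply Hv| apply Rmin_r]).
    assert (Hud : Rabs (u - x) < d) by (eapply Rlt_le_trans; [apply Hu| apply Rmin_l]).
    assert (Hvd : Rabs (v - y) < d) by (eapply Rlt_le_trans; [apply Hv| apply Rmin_l]).
    assert (Htw1 : Rabs (t * w1) <= Rabs w1).
    { rewrite Rabs_mult. rewrite (Rabs_right t) by lra.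
      generalize (Rabs_pos w1); nra. }
    assert (Htw2 : Rabs (t * w2) <= Rabs w2).
    { rewrite Rabs_mult. rewrite (Rabs_right t) by lra.
      generalize (Rabs_pos w2); nra. }
    apply Rlt_le. simpl.
    apply Hd.
    + apply Rabs_le_between in Htw1. generalize (Rabs_pos w2); unfold M; lra.
    + apply Rabs_le_between in Htw2. generalize (Rabs_pos w1); unfold M; lra.
    + apply Rabs_le_between in Htw1. apply Rabs_lt_between' in Hu1. generalize (Rabs_pos w2); unfold M; lra.
    + apply Rabs_le_between in Htw2. apply Rabs_lt_between' in Hv1. generalize (Rabs_pos w1); unfold M; lra.
    + replace (u + t * w1 - (x + t * w1)) with (u - x) by ring. auto.
    + replace (v + t * w2 - (y + t * w2)) with (v - y) by ring. auto.
  - simpl. generalize (cond_pos eps); lra.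
Qed.

Lemma cont2_affine k a b c d e f : cont2 k ->
  cont2 (fun u v => k (a + u * b + v * c) (d + u * e + v * f)).
Proof.
  intros Hk x y. apply cont2_comp2; auto.
  - repeat apply cont_plusR; try apply cont_constR; apply cont_multR;
      try apply cont_constR; [apply cont_fst|apply cont_snd].
  - repeat apply cont_plusR; try apply cont_constR; apply cont_multR;
      try apply cont_constR; [apply cont_fst|apply cont_snd].
Qed.

Definition DD (H H' : R -> R -> R) (w1 w2 : R) : Prop :=
  forall s1 s2 t, is_derive (fun t => H (s1 + t * w1) (s2 + t * w2)) t
                            (H' (s1 + t * w1) (s2 + t * w2)).

Lemma P_deriv H H' w1 w2 u1 u2 : cont2 H -> cont2 H' -> DD H H' u1 u2 ->
  DD (P H w1 w2) (P H' w1 w2) u1 u2.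
Proof.
  intros HH HH' HD s1 s2 t0.
  assert (Hd : forall t c, is_derive (fun u => H (s1 + u*u1 + c*w1) (s2 + u*u2 + c*w2)) t
                              (H' (s1 + t*u1 + c*w1) (s2 + t*u2 + c*w2))).
  { intros t c. generalize (HD (s1 + c*w1) (s2 + c*w2) t). intros H0.
    replace (s1 + t*u1 + c*w1) with (s1 + c*w1 + t*u1) by ring.
    replace (s2 + t*u2 + c*w2) with (s2 + c*w2 + t*u2) by ring.
    eapply is_derive_ext; [|exact H0]. intros z; simpl. f_equal; ring. }
  unfold P.
  replace (RInt (fun t => H' (s1 + t0 * u1 + t * w1) (s2 + t0 * u2 + t * w2)) 0 1)
    with (RInt (fun c => Derive (fun u => H (s1 + u*u1 + c*w1) (s2 + u*u2 + c*w2)) t0) 0 1).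
  2:{ apply RInt_ext. intros. apply is_derive_unique. auto. }
  apply (is_derive_RInt_param (fun u c => H (s1 + u*u1 + c*w1) (s2 + u*u2 + c*w2)) 0 1 t0).
  - apply filter_forall. intros x t _. eexists. apply Hd.
  - intros t _. apply continuity_2d_pt_ext with
      (fun u v => H' (s1 + u*u1 + v*w1) (s2 + u*u2 + v*w2)).
    { intros; symmetry; apply is_derive_unique; auto. }
    apply cont2_2d. apply cont2_affine; auto.
  - apply filter_forall. intros y. apply (P_ex H w1 w2 (s1 + y*u1) (s2 + y*u2)); auto.
Qed.

Lemma P_ftc H H' w1 w2 s1 s2 : cont2 H' -> DD H H' w1 w2 ->
  P H' w1 w2 s1 s2 = H (s1 + w1) (s2 + w2) - H s1 s2.
Proof.
  intros HH' HD. unfold P.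
  set (g := fun t => H (s1 + t * w1) (s2 + t * w2)).
  assert (Eg : forall t, Derive g t = H' (s1 + t * w1) (s2 + t * w2)).
  { intros; apply is_derive_unique; apply HD. }
  transitivity (RInt (Derive g) 0 1).
  { apply RInt_ext; intros; rewrite Eg; auto. }
  rewrite RInt_Derive.
  - unfold g. f_equal; f_equal; ring.
  - intros; eexists; apply HD.
  - intros. replace (Derive g) with (fun t => H' (s1 + t * w1) (s2 + t * w2)).
    apply cont_line; auto.
    apply functional_extensionality; intros; rewrite Eg; auto.
Qed.

Lemma P_per H w1 w2 v1 v2 : (forall s1 s2, H (s1 + v1) (s2 + v2) = H s1 s2) ->
  forall s1 s2, P H w1 w2 (s1 + v1) (s2 + v2) = P H w1 w2 s1 s2.
Proof.
  intros Hp s1 s2. unfold P. apply RInt_ext. intros.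
  rewrite <- (Hp (s1 + x * w1) (s2 + x * w2)). f_equal; ring.
Qed.

Lemma P_zero w1 w2 s1 s2 : P (fun _ _ => 0) w1 w2 s1 s2 = 0.
Proof. unfold P. rewrite RInt_const. unfold scal; simpl. unfold mult; simpl. ring. Qed.

Lemma P_plus f g w1 w2 : cont2 f -> cont2 g ->
  P (fun u v => f u v + g u v) w1 w2 = (fun s1 s2 => P f w1 w2 s1 s2 + P g w1 w2 s1 s2).
Proof.
  intros. apply functional_extensionality; intro s1; apply functional_extensionality; intro s2.
  unfold P. apply RInt_plusR; apply P_ex; auto.
Qed.
Lemma P_scal f a w1 w2 : cont2 f ->
  P (fun u v => a * f u v) w1 w2 = (fun s1 s2 => a * P f w1 w2 s1 s2).
Proof.
  intros. apply functional_extensionality; intro s1; apply functional_extensionality; intro s2.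
  unfold P. apply RInt_scalR; apply P_ex; auto.
Qed.

Definition C1f (H : R -> R -> R) : Prop :=
  cont2 H /\ (forall x y, differentiable_pt_lim H x y (D1 H x y) (D2 H x y)) /\
  cont2 (D1 H) /\ cont2 (D2 H).

Definition dirD (H : R -> R -> R) (w1 w2 : R) : R -> R -> R :=
  fun u v => D1 H u v * w1 + D2 H u v * w2.

Lemma dpl_aff s w t : derivable_pt_lim (fun t => s + t * w) t w.
Proof. apply is_derive_Reals. auto_derive; auto. ring. Qed.

Lemma C1_DD H w1 w2 : C1f H -> DD H (dirD H w1 w2) w1 w2.
Proof.
  intros [H0 [Hd [H1 H2]]] s1 s2 t. apply is_derive_Reals. unfold dirD.
  apply (derivable_pt_lim_comp_2d H (fun t => s1 + t * w1) (fun t => s2 + t * w2)).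
  - apply Hd.
  - apply dpl_aff.
  - apply dpl_aff.
Qed.

Lemma C1_cont_dirD H w1 w2 : C1f H -> cont2 (dirD H w1 w2).
Proof.
  intros [H0 [Hd [H1 H2]]]. unfold dirD. apply cont2_plus; apply cont2_mult; auto; apply cont2_const.
Qed.

Definition P3 (k : R -> R -> R) (a0 b0 a1 b1 a2 b2 : R) : R :=
  P (P (P k a2 b2) a1 b1) a0 b0 0 0.

Lemma P_zero_fun w1 w2 : P (fun _ _ => 0) w1 w2 = (fun _ _ => 0).
Proof. apply functional_extensionality; intro; apply functional_extensionality; intro; apply P_zero. Qed.

Section KL.
Variables (H : R -> R -> R) (a0 b0 a1 b1 a2 b2 : R).
Hypothesis HC : C1f H.
Hypothesis Hp0 : forall s1 s2, H (s1 + a0) (s2 + b0) = H s1 s2.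
Hypothesis Hp1 : forall s1 s2, H (s1 + a1) (s2 + b1) = H s1 s2.
Hypothesis Hp2 : forall s1 s2, H (s1 + a2) (s2 + b2) = H s1 s2.

Lemma HC0 : cont2 H. Proof. apply HC. Qed.

Lemma KL2 : P3 (dirD H a2 b2) a0 b0 a1 b1 a2 b2 = 0.
Proof.
  unfold P3.
  replace (P (dirD H a2 b2) a2 b2) with (fun _ _ : R => 0).
  rewrite !P_zero_fun. auto.
  apply functional_extensionality; intro s1; apply functional_extensionality; intro s2.
  rewrite (P_ftc H); auto using C1_cont_dirD, C1_DD. rewrite Hp2; ring.
Qed.

Lemma KL1 : P3 (dirD H a1 b1) a0 b0 a1 b1 a2 b2 = 0.
Proof.
  unfold P3.
  replace (P (P (dirD H a1 b1) a2 b2) a1 b1) with (fun _ _ : R => 0).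
  rewrite !P_zero_fun. auto.
  apply functional_extensionality; intro s1; apply functional_extensionality; intro s2.
  rewrite (P_ftc (P H a2 b2)).
  - rewrite P_per; auto. ring.
  - apply P_cont, C1_cont_dirD; auto.
  - apply P_deriv; auto using HC0, C1_cont_dirD, C1_DD.
Qed.

Lemma KL0 : P3 (dirD H a0 b0) a0 b0 a1 b1 a2 b2 = 0.
Proof.
  unfold P3.
  rewrite (P_ftc (P (P H a2 b2) a1 b1)).
  - rewrite !Rplus_0_l. rewrite <- (Rplus_0_l a0), <- (Rplus_0_l b0).
    rewrite P_per. ring. apply P_per; auto.
  - apply P_cont, P_cont, C1_cont_dirD; auto.
  - apply P_deriv. apply P_cont, HC0. apply P_cont, C1_cont_dirD; auto.
    apply P_deriv. apply HC0. apply C1_cont_dirD; auto. apply C1_DD; auto.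
Qed.
End KL.

Lemma P3_plus f g a0 b0 a1 b1 a2 b2 : cont2 f -> cont2 g ->
  P3 (fun u v => f u v + g u v) a0 b0 a1 b1 a2 b2 =
  P3 f a0 b0 a1 b1 a2 b2 + P3 g a0 b0 a1 b1 a2 b2.
Proof.
  intros Hf Hg. unfold P3.
  rewrite P_plus by auto. rewrite P_plus by (apply P_cont; auto).
  rewrite P_plus by (apply P_cont, P_cont; auto). auto.
Qed.

Lemma P3_scal f c a0 b0 a1 b1 a2 b2 : cont2 f ->
  P3 (fun u v => c * f u v) a0 b0 a1 b1 a2 b2 = c * P3 f a0 b0 a1 b1 a2 b2.
Proof.
  intros Hf. unfold P3.
  rewrite P_scal by auto. rewrite P_scal by (apply P_cont; auto).
  rewrite P_scal by (apply P_cont, P_cont; auto). auto.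
Qed.

Lemma P3_ext f g a0 b0 a1 b1 a2 b2 : (forall u v, f u v = g u v) ->
  P3 f a0 b0 a1 b1 a2 b2 = P3 g a0 b0 a1 b1 a2 b2.
Proof.
  intros E. replace f with g; auto.
  apply functional_extensionality; intro u; apply functional_extensionality; intro v; auto.
Qed.

Lemma KL_D1 H a0 b0 a1 b1 a2 b2 : C1f H ->
  (forall s1 s2, H (s1 + a0) (s2 + b0) = H s1 s2) ->
  (forall s1 s2, H (s1 + a1) (s2 + b1) = H s1 s2) ->
  (forall s1 s2, H (s1 + a2) (s2 + b2) = H s1 s2) ->
  a0 * a0 + a1 * a1 + a2 * a2 = 1 -> a0 * b0 + a1 * b1 + a2 * b2 = 0 ->
  P3 (D1 H) a0 b0 a1 b1 a2 b2 = 0.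
Proof.
  intros HC H0 H1 H2 N1 N2.
  assert (E : forall u v, D1 H u v = a0 * dirD H a0 b0 u v + (a1 * dirD H a1 b1 u v + a2 * dirD H a2 b2 u v)).
  { intros u v; unfold dirD.
    set (p := D1 H u v). set (q := D2 H u v).
    transitivity (p * (a0 * a0 + a1 * a1 + a2 * a2) + q * (a0 * b0 + a1 * b1 + a2 * b2)).
    rewrite N1, N2; ring. ring. }
  rewrite (P3_ext _ _ _ _ _ _ _ _ E).
  assert (C0 := C1_cont_dirD H a0 b0 HC).
  assert (C1' := C1_cont_dirD H a1 b1 HC).
  assert (C2 := C1_cont_dirD H a2 b2 HC).
  rewrite P3_plus, P3_scal, P3_plus, !P3_scal, KL0, KL1, KL2; auto; try ring;
    repeat first [exact C0 | exact C1' | exact C2 | apply cont2_plus | apply cont2_scal].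
Qed.

Lemma KL_D2 H a0 b0 a1 b1 a2 b2 : C1f H ->
  (forall s1 s2, H (s1 + a0) (s2 + b0) = H s1 s2) ->
  (forall s1 s2, H (s1 + a1) (s2 + b1) = H s1 s2) ->
  (forall s1 s2, H (s1 + a2) (s2 + b2) = H s1 s2) ->
  b0 * b0 + b1 * b1 + b2 * b2 = 1 -> a0 * b0 + a1 * b1 + a2 * b2 = 0 ->
  P3 (D2 H) a0 b0 a1 b1 a2 b2 = 0.
Proof.
  intros HC H0 H1 H2 N1 N2.
  assert (E : forall u v, D2 H u v = b0 * dirD H a0 b0 u v + (b1 * dirD H a1 b1 u v + b2 * dirD H a2 b2 u v)).
  { intros u v; unfold dirD.
    set (p := D1 H u v). set (q := D2 H u v).
    transitivity (q * (b0 * b0 + b1 * b1 + b2 * b2) + p * (a0 * b0 + a1 * b1 + a2 * b2)).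
    rewrite N1, N2; ring. ring. }
  rewrite (P3_ext _ _ _ _ _ _ _ _ E).
  assert (C0 := C1_cont_dirD H a0 b0 HC).
  assert (C1' := C1_cont_dirD H a1 b1 HC).
  assert (C2 := C1_cont_dirD H a2 b2 HC).
  rewrite P3_plus, P3_scal, P3_plus, !P3_scal, KL0, KL1, KL2; auto; try ring;
    repeat first [exact C0 | exact C1' | exact C2 | apply cont2_plus | apply cont2_scal].
Qed.

Lemma torus_P3 k xi1 xi2 :
  torus_int (fun x => k (dot3 x xi1) (dot3 x xi2)) =
  P3 k (xi1 0%nat) (xi2 0%nat) (xi1 1%nat) (xi2 1%nat) (xi1 2%nat) (xi2 2%nat).
Proof.
  unfold torus_int, P3, P. apply RInt_ext; intros a _. apply RInt_ext; intros b _.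
  apply RInt_ext; intros c _. unfold dot3, sum3, vec3. f_equal; ring.
Qed.

Lemma iterD_app s b g : iterD (s ++ b :: nil) g = iterD s ((if b then D1 else D2) g).
Proof. induction s; simpl; auto. rewrite IHs; auto. Qed.

Lemma smooth2_D1 g : smooth2 g -> smooth2 (D1 g).
Proof. intros H s x y. generalize (H (s ++ true :: nil) x y). rewrite iterD_app. auto. Qed.
Lemma smooth2_D2 g : smooth2 g -> smooth2 (D2 g).
Proof. intros H s x y. generalize (H (s ++ false :: nil) x y). rewrite iterD_app. auto. Qed.

Lemma smooth2_cont g : smooth2 g -> cont2 g.
Proof. intros H x y. apply (H nil x y). Qed.

Lemma smooth2_C1 g : smooth2 g -> C1f g.
Proof.
  intros H. split; [|split;[|split]].
  - apply smooth2_cont; auto.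
  - intros x y. apply filterdiff_differentiable_pt_lim.
    generalize (is_derive_filterdiff g x y (D1 g) (D2 g x y)). intros K.
    eapply filterdiff_ext_lin. apply K.
    + apply filter_forall. intros [u v]. simpl. apply Derive_correct. apply (H nil u v).
    + apply Derive_correct. apply (H nil x y).
    + apply (smooth2_cont (D1 g)). apply smooth2_D1; auto.
    + intros [u v]. simpl. reflexivity.
  - apply smooth2_cont, smooth2_D1; auto.
  - apply smooth2_cont, smooth2_D2; auto.
Qed.

Lemma dpl_mult0 x y : differentiable_pt_lim (fun a b => a * b) x y y x.
Proof.
  intros eps. exists eps. intros u v Hu Hv.
  replace (u * v - x * y - (y * (u - x) + x * (v - y))) with ((u - x) * (v - y)) by ring.
  rewrite Rabs_mult. apply Rmult_le_compat; try apply Rabs_pos. lra. apply Rmax_r.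
Qed.

Lemma dpl_plus0 x y : differentiable_pt_lim (fun a b => a + b) x y 1 1.
Proof.
  intros eps. exists eps. intros u v Hu Hv.
  replace (u + v - (x + y) - (1 * (u - x) + 1 * (v - y))) with 0 by ring.
  rewrite Rabs_R0. apply Rmult_le_pos. apply Rlt_le, cond_pos.
  apply Rle_trans with (Rabs (u - x)). apply Rabs_pos. apply Rmax_l.
Qed.

Lemma dpl_lin a b c x y : differentiable_pt_lim (fun u v => a + u * b + v * c) x y b c.
Proof.
  intros eps. exists eps. intros u v Hu Hv.
  replace (a + u * b + v * c - (a + x * b + y * c) - (b * (u - x) + c * (v - y))) with 0 by ring.
  rewrite Rabs_R0. apply Rmult_le_pos. apply Rlt_le, cond_pos.
  apply Rle_trans with (Rabs (u - x)). apply Rabs_pos. apply Rmax_l.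
Qed.

Lemma C1f_D1 H x y lx ly : differentiable_pt_lim H x y lx ly -> D1 H x y = lx.
Proof. intros Hd. apply (differentiable_pt_lim_unique H x y lx ly Hd). Qed.
Lemma C1f_D2 H x y lx ly : differentiable_pt_lim H x y lx ly -> D2 H x y = ly.
Proof. intros Hd. apply (differentiable_pt_lim_unique H x y lx ly Hd). Qed.

Lemma C1f_intro H h1 h2 : cont2 H -> cont2 h1 -> cont2 h2 ->
  (forall x y, differentiable_pt_lim H x y (h1 x y) (h2 x y)) -> C1f H.
Proof.
  intros C0 C1 C2 Hd. split; [auto|split;[|split]].
  - intros x y. rewrite (C1f_D1 _ _ _ _ _ (Hd x y)), (C1f_D2 _ _ _ _ _ (Hd x y)). auto.
  - apply cont2_ext with h1; auto. intros; symmetry; eapply C1f_D1; eauto.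
  - apply cont2_ext with h2; auto. intros; symmetry; eapply C1f_D2; eauto.
Qed.

Lemma C1f_dpl H x y : C1f H -> differentiable_pt_lim H x y (D1 H x y) (D2 H x y).
Proof. intros [_ [Hd _]]; auto. Qed.
Lemma C1f_c0 H : C1f H -> cont2 H. Proof. intros [? _]; auto. Qed.
Lemma C1f_c1 H : C1f H -> cont2 (D1 H). Proof. intros [_ [_ [? _]]]; auto. Qed.
Lemma C1f_c2 H : C1f H -> cont2 (D2 H). Proof. intros [_ [_ [_ ?]]]; auto. Qed.

Lemma dpl_mult f g x y : C1f f -> C1f g ->
  differentiable_pt_lim (fun u v => f u v * g u v) x y
    (D1 f x y * g x y + f x y * D1 g x y) (D2 f x y * g x y + f x y * D2 g x y).
Proof.
  intros Hf Hg.
  generalize (differentiable_pt_lim_comp (fun a b => a * b) f g x y (g x y) (f x y)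
     _ _ _ _ (dpl_mult0 (f x y) (g x y)) (C1f_dpl f x y Hf) (C1f_dpl g x y Hg)).
  intros K. eapply differentiable_pt_lim_ext; [|replace (D1 f x y * g x y + f x y * D1 g x y) with (g x y * D1 f x y + f x y * D1 g x y) by ring;
    replace (D2 f x y * g x y + f x y * D2 g x y) with (g x y * D2 f x y + f x y * D2 g x y) by ring; exact K].
  exists (mkposreal 1 Rlt_0_1). auto.
Qed.

Lemma C1f_mult f g : C1f f -> C1f g -> C1f (fun u v => f u v * g u v).
Proof.
  intros Hf Hg. apply C1f_intro with (fun x y => D1 f x y * g x y + f x y * D1 g x y)
    (fun x y => D2 f x y * g x y + f x y * D2 g x y).
  - apply cont2_mult; apply C1f_c0; auto.
  - apply cont2_plus; apply cont2_mult; auto using C1f_c0, C1f_c1.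
  - apply cont2_plus; apply cont2_mult; auto using C1f_c0, C1f_c2.
  - intros; apply dpl_mult; auto.
Qed.

Lemma dpl_plus f g x y : C1f f -> C1f g ->
  differentiable_pt_lim (fun u v => f u v + g u v) x y
    (D1 f x y + D1 g x y) (D2 f x y + D2 g x y).
Proof.
  intros Hf Hg.
  generalize (differentiable_pt_lim_comp (fun a b => a + b) f g x y 1 1
     _ _ _ _ (dpl_plus0 (f x y) (g x y)) (C1f_dpl f x y Hf) (C1f_dpl g x y Hg)).
  intros K. eapply differentiable_pt_lim_ext; [|replace (D1 f x y + D1 g x y) with (1 * D1 f x y + 1 * D1 g x y) by ring;
    replace (D2 f x y + D2 g x y) with (1 * D2 f x y + 1 * D2 g x y) by ring; exact K].
  exists (mkposreal 1 Rlt_0_1). auto.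
Qed.

Lemma C1f_plus f g : C1f f -> C1f g -> C1f (fun u v => f u v + g u v).
Proof.
  intros Hf Hg. apply C1f_intro with (fun x y => D1 f x y + D1 g x y)
    (fun x y => D2 f x y + D2 g x y).
  - apply cont2_plus; apply C1f_c0; auto.
  - apply cont2_plus; auto using C1f_c1.
  - apply cont2_plus; auto using C1f_c2.
  - intros; apply dpl_plus; auto.
Qed.

Lemma C1f_lin a b c : C1f (fun u v => a + u * b + v * c).
Proof.
  apply C1f_intro with (fun _ _ => b) (fun _ _ => c); try apply cont2_const.
  - apply cont2_plus. apply cont2_plus. apply cont2_const.
    apply cont2_mult. apply cont2_fst. apply cont2_const.
    apply cont2_mult. apply cont2_snd. apply cont2_const.
  - intros; apply dpl_lin.
Qed.

Lemma C1f_const c : C1f (fun _ _ => c).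
Proof.
  apply C1f_intro with (fun _ _ => 0) (fun _ _ => 0); try apply cont2_const.
  intros x y. eapply differentiable_pt_lim_ext; [|apply (dpl_lin c 0 0)].
  exists (mkposreal 1 Rlt_0_1). intros; simpl; ring.
Qed.

Lemma C1f_ext f g : (forall u v, f u v = g u v) -> C1f f -> C1f g.
Proof.
  intros E H. replace g with f; auto.
  apply functional_extensionality; intro u; apply functional_extensionality; intro v; auto.
Qed.

Lemma C1f_scal c f : C1f f -> C1f (fun u v => c * f u v).
Proof. intros; apply C1f_mult; auto using C1f_const. Qed.

Lemma dot3_upd x m t v : (m < 3)%nat -> dot3 (upd x m t) v = dot3 x v + (t - x m) * v m.
Proof.
  intros Hm. unfold dot3, sum3, upd.
  destruct m as [|[|[|m]]]; simpl; try ring. lia.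
Qed.

Lemma partial_chain F xi1 xi2 m x : (m < 3)%nat -> C1f F ->
  partial m (fun x => F (dot3 x xi1) (dot3 x xi2)) x =
  D1 F (dot3 x xi1) (dot3 x xi2) * xi1 m + D2 F (dot3 x xi1) (dot3 x xi2) * xi2 m.
Proof.
  intros Hm HF. unfold partial.
  rewrite (Derive_ext _ (fun t => F (dot3 x xi1 + (t - x m) * xi1 m) (dot3 x xi2 + (t - x m) * xi2 m)))
    by (intros; rewrite !dot3_upd; auto).
  apply is_derive_unique. apply is_derive_Reals.
  set (y1 := dot3 x xi1). set (y2 := dot3 x xi2).
  assert (E1 : y1 = y1 + (x m - x m) * xi1 m) by ring.
  assert (E2 : y2 = y2 + (x m - x m) * xi2 m) by ring.
  apply (derivable_pt_lim_comp_2d F (fun t => y1 + (t - x m) * xi1 m) (fun t => y2 + (t - x m) * xi2 m)).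
  - rewrite <- E1, <- E2. apply C1f_dpl; auto.
  - apply is_derive_Reals. auto_derive; auto. ring.
  - apply is_derive_Reals. auto_derive; auto. ring.
Qed.

Lemma partial_scal_r m F c : partial m (fun x => F x * c) = fun x => partial m F x * c.
Proof.
  apply functional_extensionality; intro x. unfold partial. apply Derive_scal_l.
Qed.

Definition cross3 (a b : nat -> R) : nat -> R :=
  vec3 (a 1%nat * b 2%nat - a 2%nat * b 1%nat) (a 2%nat * b 0%nat - a 0%nat * b 2%nat)
       (a 0%nat * b 1%nat - a 1%nat * b 0%nat).

Lemma gram r a b : let n := cross3 a b in
  (dot3 r n) ^ 2 = dot3 r r * dot3 a a * dot3 b b - dot3 r r * (dot3 a b) ^ 2
    - (dot3 r a) ^ 2 * dot3 b b - (dot3 r b) ^ 2 * dot3 a a + 2 * dot3 r a * dot3 r b * dot3 a b.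
Proof. unfold dot3, sum3, cross3, vec3. ring. Qed.

Lemma complete3 a b c : orthonormal3 a b c ->
  forall r, dot3 r r = (dot3 r a) ^ 2 + (dot3 r b) ^ 2 + (dot3 r c) ^ 2.
Proof.
  intros [Haa [Hbb [Hcc [Hab [Hac Hbc]]]]] r.
  set (n := cross3 a b).
  assert (G : forall r, (dot3 r n) ^ 2 = dot3 r r - (dot3 r a) ^ 2 - (dot3 r b) ^ 2).
  { intros r'. unfold n. rewrite gram. rewrite Haa, Hbb, Hab. ring. }
  assert (Hnn : dot3 n n = 1).
  { transitivity (dot3 a a * dot3 b b - (dot3 a b) ^ 2).
    unfold n, dot3, sum3, cross3, vec3; ring. rewrite Haa, Hbb, Hab; ring. }
  set (s := dot3 c n).
  assert (Hs : s ^ 2 = 1). { unfold s. rewrite G. rewrite Hcc. replace (dot3 c a) with (dot3 a c) by (unfold dot3, sum3; ring).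
    replace (dot3 c b) with (dot3 b c) by (unfold dot3, sum3; ring). rewrite Hac, Hbc. ring. }
  assert (Z : dot3 (fun i => c i - s * n i) (fun i => c i - s * n i) = 0).
  { transitivity (dot3 c c - 2 * s * dot3 c n + s ^ 2 * dot3 n n).
    unfold s; clearbody n; unfold dot3, sum3; cbv beta; ring. rewrite Hcc, Hnn. change (dot3 c n) with s. nra. }
  assert (Ci : forall i, (i < 3)%nat -> c i = s * n i).
  { unfold dot3, sum3 in Z. intros i Hi.
    assert (forall j, 0 <= (c j - s * n j) * (c j - s * n j)) by (intros; apply Rle_0_sqr).
    cbv beta in Z.
    assert (K : (c i - s * n i) * (c i - s * n i) = 0).
    { generalize (H 0%nat) (H 1%nat) (H 2%nat). destruct i as [|[|[|i]]]; try lia; intros; lra. }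
    apply Rmult_integral in K. destruct K; lra. }
  assert (Erc : dot3 r c = s * dot3 r n).
  { unfold dot3, sum3. rewrite (Ci 0%nat), (Ci 1%nat), (Ci 2%nat) by lia. ring. }
  rewrite Erc. replace ((s * dot3 r n) ^ 2) with (s ^ 2 * (dot3 r n) ^ 2) by ring.
  rewrite Hs, G. ring.
Qed.

Lemma row_orth a b c k l : orthonormal3 a b c -> (k < 3)%nat -> (l < 3)%nat ->
  b k * b l + c k * c l = delta k l - a k * a l.
Proof.
  intros Ho Hk Hl.
  assert (E1 : forall i, (i < 3)%nat -> a i * a i + b i * b i + c i * c i = 1).
  { intros i Hi. generalize (complete3 a b c Ho (vec3 (if Nat.eqb i 0 then 1 else 0)
       (if Nat.eqb i 1 then 1 else 0) (if Nat.eqb i 2 then 1 else 0))).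
    unfold dot3, sum3, vec3. destruct i as [|[|[|i]]]; simpl; try lia; intros H; nra. }
  assert (E2 : forall i j, (i < 3)%nat -> (j < 3)%nat -> i <> j ->
      a i * a j + b i * b j + c i * c j = 0).
  { intros i j Hi Hj Hij.
    generalize (complete3 a b c Ho (vec3 (if orb (Nat.eqb i 0) (Nat.eqb j 0) then 1 else 0)
       (if orb (Nat.eqb i 1) (Nat.eqb j 1) then 1 else 0) (if orb (Nat.eqb i 2) (Nat.eqb j 2) then 1 else 0))).
    generalize (E1 i Hi) (E1 j Hj).
    unfold dot3, sum3, vec3.
    destruct i as [|[|[|i]]]; destruct j as [|[|[|j]]]; simpl; try lia; intros; nra. }
  unfold delta. destruct (Nat.eqb k l) eqn:E.
  - apply Nat.eqb_eq in E; subst. generalize (E1 l Hl). lra.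
  - apply Nat.eqb_neq in E. generalize (E2 k l Hk Hl E). lra.
Qed.

Lemma C1f_is1 F u v : C1f F -> is_derive (fun t => F t v) u (D1 F u v).
Proof.
  intros HF. apply is_derive_Reals.
  replace (D1 F u v) with (D1 F u v * 1 + D2 F u v * 0) by ring.
  apply (derivable_pt_lim_comp_2d F (fun t => t) (fun _ => v)).
  apply C1f_dpl; auto. apply derivable_pt_lim_id. apply derivable_pt_lim_const.
Qed.
Lemma C1f_is2 F u v : C1f F -> is_derive (fun t => F u t) v (D2 F u v).
Proof.
  intros HF. apply is_derive_Reals.
  replace (D2 F u v) with (D1 F u v * 0 + D2 F u v * 1) by ring.
  apply (derivable_pt_lim_comp_2d F (fun _ => u) (fun t => t)).
  apply C1f_dpl; auto. apply derivable_pt_lim_const. apply derivable_pt_lim_id.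
Qed.
Lemma C1f_ex1 F u v : C1f F -> ex_derive (fun t => F t v) u.
Proof. intros; eexists; apply C1f_is1; auto. Qed.
Lemma C1f_ex2 F u v : C1f F -> ex_derive (fun t => F u t) v.
Proof. intros; eexists; apply C1f_is2; auto. Qed.

Lemma D1_dirD F a b u v : C1f (D1 F) -> C1f (D2 F) ->
  D1 (dirD F a b) u v = D1 (D1 F) u v * a + D1 (D2 F) u v * b.
Proof.
  intros H1 H2. unfold dirD. unfold D1 at 1.
  rewrite Derive_plus, !Derive_scal_l. auto.
  apply ex_derive_mult; [apply (C1f_ex1 (D1 F)); auto | apply ex_derive_const].
  apply ex_derive_mult; [apply (C1f_ex1 (D2 F)); auto | apply ex_derive_const].
Qed.
Lemma D2_dirD F a b u v : C1f (D1 F) -> C1f (D2 F) ->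
  D2 (dirD F a b) u v = D2 (D1 F) u v * a + D2 (D2 F) u v * b.
Proof.
  intros H1 H2. unfold dirD. unfold D2 at 1.
  rewrite Derive_plus, !Derive_scal_l. auto.
  apply ex_derive_mult; [apply (C1f_ex2 (D1 F)); auto | apply ex_derive_const].
  apply ex_derive_mult; [apply (C1f_ex2 (D2 F)); auto | apply ex_derive_const].
Qed.

Lemma C1f_dirD F a b : C1f (D1 F) -> C1f (D2 F) -> C1f (dirD F a b).
Proof.
  intros. unfold dirD. apply C1f_plus.
  - apply (C1f_ext (fun u v => a * D1 F u v)). intros; ring. apply C1f_scal; auto.
  - apply (C1f_ext (fun u v => b * D2 F u v)). intros; ring. apply C1f_scal; auto.
Qed.

Lemma D1_mult f g u v : C1f f -> C1f g ->
  D1 (fun u v => f u v * g u v) u v = D1 f u v * g u v + f u v * D1 g u v.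
Proof. intros; eapply C1f_D1; apply dpl_mult; auto. Qed.
Lemma D2_mult f g u v : C1f f -> C1f g ->
  D2 (fun u v => f u v * g u v) u v = D2 f u v * g u v + f u v * D2 g u v.
Proof. intros; eapply C1f_D2; apply dpl_mult; auto. Qed.

Lemma Derive_shift f a u : Derive (fun t => f (t - a)) (u + a) = Derive f u.
Proof.
  unfold Derive. rewrite (Lim_ext (fun h => (f (u + a + h - a) - f (u + a - a)) / h) (fun h => (f (u + h) - f u) / h)). reflexivity.
  intros h. replace (u + a + h - a) with (u + h) by ring. replace (u + a - a) with u by ring. reflexivity.
Qed.

Lemma D1_per g a b : (forall u v, g (u + a) (v + b) = g u v) ->
  forall u v, D1 g (u + a) (v + b) = D1 g u v.
Proof.
  intros Hp u v. unfold D1.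
  rewrite (Derive_ext _ (fun t => g (t - a) v)).
  apply (Derive_shift (fun t => g t v) a u).
  intros t. rewrite <- (Hp (t - a) v). f_equal; ring.
Qed.
Lemma D2_per g a b : (forall u v, g (u + a) (v + b) = g u v) ->
  forall u v, D2 g (u + a) (v + b) = D2 g u v.
Proof.
  intros Hp u v. unfold D2.
  rewrite (Derive_ext _ (fun t => g u (t - b))).
  apply (Derive_shift (fun t => g u t) b v).
  intros t. rewrite <- (Hp u (t - b)). f_equal; ring.
Qed.

Lemma per_of_hper (phi : R -> R -> R) xi xi1 xi2 : orthonormal3 xi xi1 xi2 ->
  periodic3 (fun x => phi (dot3 x xi1) (dot3 x xi2)) ->
  forall k, (k < 3)%nat -> forall u v, phi (u + xi1 k) (v + xi2 k) = phi u v.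
Proof.
  intros [_ [H11 [H22 [_ [_ H12]]]]] Hp k Hk u v.
  set (x := fun i => u * xi1 i + v * xi2 i).
  assert (E1 : dot3 x xi1 = u).
  { transitivity (u * dot3 xi1 xi1 + v * dot3 xi1 xi2). unfold x, dot3, sum3; ring.
    rewrite H11, H12; ring. }
  assert (E2 : dot3 x xi2 = v).
  { transitivity (u * dot3 xi1 xi2 + v * dot3 xi2 xi2). unfold x, dot3, sum3; ring.
    rewrite H22, H12; ring. }
  generalize (Hp x k Hk). simpl. rewrite !dot3_upd by auto. rewrite E1, E2.
  replace (x k + 1 - x k) with 1 by ring. rewrite !Rmult_1_l. auto.
Qed.

Definition d2 (u1 u2 v1 v2 : R) : R := (u1 - v1) * (u1 - v1) + (u2 - v2) * (u2 - v2).

Lemma d2_nonneg u1 u2 v1 v2 : 0 <= d2 u1 u2 v1 v2.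
Proof. unfold d2. apply Rplus_le_le_0_compat; apply Rle_0_sqr. Qed.

Lemma d2_sym u1 u2 v1 v2 : d2 u1 u2 v1 v2 = d2 v1 v2 u1 u2.
Proof. unfold d2; ring. Qed.

Lemma d2_par a1 a2 b1 b2 u1 u2 : d2 a1 a2 b1 b2 <= 2 * d2 u1 u2 a1 a2 + 2 * d2 u1 u2 b1 b2.
Proof.
  generalize (Rle_0_sqr (2*u1-a1-b1)) (Rle_0_sqr (2*u2-a2-b2)). unfold Rsqr, d2. intros; nra.
Qed.

Lemma d2_tri a1 a2 b1 b2 c1 c2 :
  sqrt (d2 a1 a2 c1 c2) <= sqrt (d2 a1 a2 b1 b2) + sqrt (d2 b1 b2 c1 c2).
Proof.
  set (S1 := sqrt (d2 a1 a2 b1 b2)). set (S2 := sqrt (d2 b1 b2 c1 c2)).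
  assert (H1 : S1 * S1 = d2 a1 a2 b1 b2) by (apply sqrt_sqrt, d2_nonneg).
  assert (H2 : S2 * S2 = d2 b1 b2 c1 c2) by (apply sqrt_sqrt, d2_nonneg).
  assert (P1 : 0 <= S1) by apply sqrt_pos. assert (P2 : 0 <= S2) by apply sqrt_pos.
  set (x1 := a1 - b1). set (x2 := a2 - b2). set (y1 := b1 - c1). set (y2 := b2 - c2).
  assert (CS : x1 * y1 + x2 * y2 <= S1 * S2).
  { assert (L : (x1 * y1 + x2 * y2) * (x1 * y1 + x2 * y2) <= (S1 * S2) * (S1 * S2)).
    { replace ((S1 * S2) * (S1 * S2)) with ((S1 * S1) * (S2 * S2)) by ring.
      rewrite H1, H2.
      assert (E : d2 a1 a2 b1 b2 * d2 b1 b2 c1 c2 = (x1 * y1 + x2 * y2) * (x1 * y1 + x2 * y2) + (x1 * y2 - x2 * y1) * (x1 * y2 - x2 * y1))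
        by (unfold d2, x1, x2, y1, y2; ring).
      rewrite E. generalize (Rle_0_sqr (x1 * y2 - x2 * y1)). unfold Rsqr. lra. }
    assert (0 <= S1 * S2) by (apply Rmult_le_pos; auto).
    destruct (Rle_lt_dec (x1 * y1 + x2 * y2) 0). lra. nra. }
  rewrite <- (sqrt_square (S1 + S2)) by lra.
  apply sqrt_le_1_alt.
  replace ((S1 + S2) * (S1 + S2)) with (S1 * S1 + S2 * S2 + 2 * (S1 * S2)) by ring.
  rewrite H1, H2. unfold d2 in *. unfold x1, x2, y1, y2 in CS. nra.
Qed.

Lemma sumsq0 x y : x * x + y * y = 0 -> x = 0 /\ y = 0.
Proof.
  intros H. generalize (Rle_0_sqr x) (Rle_0_sqr y); unfold Rsqr; intros.
  assert (x * x = 0) by lra. assert (y * y = 0) by lra.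
  split; [destruct (Rmult_integral _ _ H2)|destruct (Rmult_integral _ _ H3)]; auto.
Qed.

Definition sq (p1 p2 d u1 u2 : R) : Prop := Rabs (u1 - p1) < d /\ Rabs (u2 - p2) < d.

Lemma sq_d2 p1 p2 d u1 u2 : 0 < d -> sq p1 p2 (d / 2) u1 u2 -> d2 u1 u2 p1 p2 < d * d.
Proof.
  intros Hd [H1 H2]. unfold d2.
  apply Rabs_lt_between in H1. apply Rabs_lt_between in H2. nra.
Qed.

Lemma sq_sub p1 p2 d w1 w2 u1 u2 : sq p1 p2 (d / 2) w1 w2 -> sq w1 w2 (d / 2) u1 u2 -> sq p1 p2 d u1 u2.
Proof.
  intros [H1 H2] [H3 H4]. split.
  - replace (u1 - p1) with ((u1 - w1) + (w1 - p1)) by ring.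
    eapply Rle_lt_trans. apply Rabs_triang. lra.
  - replace (u2 - p2) with ((u2 - w2) + (w2 - p2)) by ring.
    eapply Rle_lt_trans. apply Rabs_triang. lra.
Qed.

Lemma sq_center p1 p2 d : 0 < d -> sq p1 p2 d p1 p2.
Proof. intros; unfold sq; rewrite !Rminus_diag, Rabs_R0; auto. Qed.

Lemma sq_D1 f g p1 p2 d : 0 < d -> (forall u v, sq p1 p2 d u v -> f u v = g u v) ->
  D1 f p1 p2 = D1 g p1 p2.
Proof.
  intros Hd E. unfold D1. apply Derive_ext_loc. exists (mkposreal d Hd). intros y Hy.
  apply E. split. apply Hy. rewrite Rminus_diag, Rabs_R0; auto.
Qed.
Lemma sq_D2 f g p1 p2 d : 0 < d -> (forall u v, sq p1 p2 d u v -> f u v = g u v) ->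
  D2 f p1 p2 = D2 g p1 p2.
Proof.
  intros Hd E. unfold D2. apply Derive_ext_loc. exists (mkposreal d Hd). intros y Hy.
  apply E. split. rewrite Rminus_diag, Rabs_R0; auto. apply Hy.
Qed.

Lemma sq_loc2d P p1 p2 d : 0 < d -> (forall u v, sq p1 p2 d u v -> P u v) -> locally_2d P p1 p2.
Proof. intros Hd H. exists (mkposreal d Hd). intros u v Hu Hv. apply H; split; auto. Qed.

Lemma loc_C1 H : (forall p1 p2, exists g d, 0 < d /\ C1f g /\ forall u v, sq p1 p2 d u v -> H u v = g u v) ->
  C1f H.
Proof.
  intros HL.
  assert (ED1 : forall p1 p2, exists g d, 0 < d /\ C1f g /\ forall u v, sq p1 p2 d u v ->
     H u v = g u v /\ D1 H u v = D1 g u v /\ D2 H u v = D2 g u v).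
  { intros p1 p2. destruct (HL p1 p2) as [g [d [Hd [Hg E]]]].
    exists g, (d / 2). split; [lra|split; auto]. intros u v Huv.
    assert (Hd2 : 0 < d / 2) by lra.
    split; [|split].
    - apply E. eapply sq_sub; eauto. apply sq_center; auto.
    - apply (sq_D1 _ _ _ _ (d / 2)); auto. intros; apply E; eapply sq_sub; eauto.
    - apply (sq_D2 _ _ _ _ (d / 2)); auto. intros; apply E; eapply sq_sub; eauto. }
  split; [|split; [|split]].
  - intros p1 p2. apply continuity_2d_pt_filterlim.
    destruct (ED1 p1 p2) as [g [d [Hd [Hg E]]]].
    apply continuity_2d_pt_ext_loc with g.
    apply sq_loc2d with d; auto. intros; symmetry; apply E; auto.
    apply cont2_2d, C1f_c0; auto.
  - intros p1 p2. destruct (ED1 p1 p2) as [g [d [Hd [Hg E]]]].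
    destruct (E p1 p2 (sq_center _ _ _ Hd)) as [_ [E1 E2]]. rewrite E1, E2.
    apply differentiable_pt_lim_ext with g.
    apply sq_loc2d with d; auto. intros; symmetry; apply E; auto.
    apply C1f_dpl; auto.
  - intros p1 p2. apply continuity_2d_pt_filterlim.
    destruct (ED1 p1 p2) as [g [d [Hd [Hg E]]]].
    apply continuity_2d_pt_ext_loc with (D1 g).
    apply sq_loc2d with d; auto. intros; symmetry; apply E; auto.
    apply cont2_2d, C1f_c1; auto.
  - intros p1 p2. apply continuity_2d_pt_filterlim.
    destruct (ED1 p1 p2) as [g [d [Hd [Hg E]]]].
    apply continuity_2d_pt_ext_loc with (D2 g).
    apply sq_loc2d with d; auto. intros; symmetry; apply E; auto.
    apply cont2_2d, C1f_c2; auto.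
Qed.

Section Geo.
Variables (psi phi : R -> R -> R) (I : Type) (c : I -> R * R).
Hypothesis hpsi_smooth : smooth2 psi.
Hypothesis hpsi_cpt : compactly_supported2 psi.
Hypothesis hpsi_rad : radial2 psi.
Hypothesis hdisj : forall i j : I, i <> j -> forall y1 y2,
      ~ (in_support2 (translate2 psi (c i)) y1 y2 /\
         in_support2 (translate2 psi (c j)) y1 y2).
Hypothesis hsum : forall y1 y2,
      (exists i : I, translate2 psi (c i) y1 y2 <> 0 /\
                     phi y1 y2 = translate2 psi (c i) y1 y2) \/
      ((forall i : I, translate2 psi (c i) y1 y2 = 0) /\ phi y1 y2 = 0).
Hypothesis hnz : exists z1 z2, psi z1 z2 <> 0.

Definition Esup (r : R) : Prop := exists z1 z2, psi z1 z2 <> 0 /\ r = z1 * z1 + z2 * z2.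

Lemma Esup_bound : bound Esup.
Proof.
  destruct hpsi_cpt as [M HM]. exists M. intros r [z1 [z2 [Hz ->]]].
  destruct (Rle_lt_dec (z1 * z1 + z2 * z2) M) as [h|h]; auto.
  exfalso. apply Hz. apply HM. simpl. lra.
Qed.

Lemma Esup_ne : exists r, Esup r.
Proof. destruct hnz as [z1 [z2 Hz]]. exists (z1 * z1 + z2 * z2), z1, z2; auto. Qed.

Definition R2 : R := proj1_sig (completeness Esup Esup_bound Esup_ne).

Lemma R2_lub : is_lub Esup R2.
Proof. unfold R2. destruct (completeness Esup Esup_bound Esup_ne); auto. Qed.

Lemma R2_ub z1 z2 : psi z1 z2 <> 0 -> z1 * z1 + z2 * z2 <= R2.
Proof. intros H. apply (proj1 R2_lub). exists z1, z2; auto. Qed.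

Lemma R2_app d : 0 < d -> exists z1 z2, psi z1 z2 <> 0 /\ R2 - d < z1 * z1 + z2 * z2.
Proof.
  intros Hd. apply NNPP. intros N.
  assert (U : is_upper_bound Esup (R2 - d)).
  { intros r [z1 [z2 [Hz ->]]]. destruct (Rle_lt_dec (z1 * z1 + z2 * z2) (R2 - d)); auto.
    exfalso; apply N; exists z1, z2; split; auto. }
  generalize (proj2 R2_lub _ U). lra.
Qed.

Lemma psi_cont : cont2 psi.
Proof. apply smooth2_cont; auto. Qed.

Lemma R2_pos : 0 < R2.
Proof.
  destruct hnz as [z1 [z2 Hz]].
  destruct (Req_dec (z1 * z1 + z2 * z2) 0) as [E|E].
  - assert (Z1 : z1 = 0) by nra. assert (Z2 : z2 = 0) by nra. subst.
    destruct (continuity_2d_pt_neq_0 psi 0 0 (cont2_2d psi psi_cont 0 0) Hz) as [d Hd].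
    assert (Hd2 : 0 < d / 2) by (generalize (cond_pos d); lra).
    assert (N : psi (d / 2) 0 <> 0).
    { apply Hd; rewrite ?Rminus_0_r, ?Rabs_R0; [rewrite Rabs_right; lra | apply cond_pos]. }
    generalize (R2_ub _ _ N). nra.
  - generalize (R2_ub _ _ Hz). nra.
Qed.

Definition Rr : R := sqrt R2.
Lemma Rr_pos : 0 < Rr. Proof. apply sqrt_lt_R0, R2_pos. Qed.
Lemma Rr_sq : Rr * Rr = R2. Proof. apply sqrt_sqrt. apply Rlt_le, R2_pos. Qed.

Definition inD (i : I) (u v : R) : Prop := d2 u v (fst (c i)) (snd (c i)) <= R2.

Lemma T_nz i u v : translate2 psi (c i) u v <> 0 -> inD i u v.
Proof. intros H. apply R2_ub in H. unfold inD, d2. lra. Qed.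

Lemma T_out i u v : ~ inD i u v -> translate2 psi (c i) u v = 0.
Proof. intros H. apply NNPP. intros N. apply H, T_nz; auto. Qed.

Lemma circle_support a1 a2 p1 p2 : d2 p1 p2 a1 a2 = R2 -> in_support2 (translate2 psi (a1, a2)) p1 p2.
Proof.
  intros Hp eps Heps.
  assert (HR := R2_pos). assert (HRr := Rr_pos).
  assert (Heta : 0 < eps * Rr) by (apply Rmult_lt_0_compat; auto).
  destruct (R2_app _ Heta) as [z1 [z2 [Hz Hzr]]].
  generalize (R2_ub _ _ Hz). intros Hub.
  set (r2 := z1 * z1 + z2 * z2) in *.
  assert (Hr2 : 0 <= r2) by (unfold r2; nra).
  set (s := sqrt (r2 / R2)).
  assert (Hs2 : s * s = r2 / R2) by (apply sqrt_sqrt; apply Rdiv_le_0_compat; lra).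
  assert (Hs0 : 0 <= s) by apply sqrt_pos.
  assert (Hs1 : s <= 1).
  { unfold s. rewrite <- sqrt_1. apply sqrt_le_1_alt. apply Rmult_le_reg_r with R2; auto.
    unfold Rdiv; rewrite Rmult_assoc, Rinv_l; lra. }
  exists (a1 + s * (p1 - a1)), (a2 + s * (p2 - a2)). split.
  - assert (E : (p1 - (a1 + s * (p1 - a1))) ^ 2 + (p2 - (a2 + s * (p2 - a2))) ^ 2 = (1 - s) * (1 - s) * R2)
      by (rewrite <- Hp; unfold d2; ring).
    rewrite E.
    assert (K : (1 - s) * R2 <= (R2 - r2)).
    { replace (R2 - r2) with ((1 - s * s) * R2) by (rewrite Hs2; field; lra).
      assert (0 <= s * (1 - s) * R2) by (apply Rmult_le_pos; [apply Rmult_le_pos|]; lra). nra. }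
    assert (K0 : 0 <= (1 - s) * R2) by (apply Rmult_le_pos; lra).
    assert (K2 : (1 - s) * (1 - s) * R2 * R2 <= (R2 - r2) * (R2 - r2)).
    { replace ((1 - s) * (1 - s) * R2 * R2) with (((1 - s) * R2) * ((1 - s) * R2)) by ring.
      apply Rmult_le_compat; lra. }
    assert (K3 : (R2 - r2) * (R2 - r2) < eps * Rr * (eps * Rr)).
    { apply Rmult_le_0_lt_compat; lra. }
    assert (K4 : eps * Rr * (eps * Rr) = eps ^ 2 * R2) by (rewrite <- Rr_sq; ring).
    apply Rmult_lt_reg_r with R2; auto. lra.
  - unfold translate2; simpl.
    replace (a1 + s * (p1 - a1) - a1) with (s * (p1 - a1)) by ring.
    replace (a2 + s * (p2 - a2) - a2) with (s * (p2 - a2)) by ring.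
    rewrite (hpsi_rad _ _ z1 z2); auto.
    transitivity (s * s * d2 p1 p2 a1 a2). unfold d2; ring.
    rewrite Hs2, Hp. unfold r2. field. lra.
Qed.

Lemma DJ i j : i <> j -> 4 * R2 < d2 (fst (c i)) (snd (c i)) (fst (c j)) (snd (c j)).
Proof.
  intros Hij. destruct (Rlt_le_dec (4 * R2) (d2 (fst (c i)) (snd (c i)) (fst (c j)) (snd (c j)))) as [h|h]; auto.
  exfalso.
  assert (HR := R2_pos). assert (HRr := Rr_pos).
  destruct (c i) as [a1 a2] eqn:Ei. destruct (c j) as [b1 b2] eqn:Ej. simpl in h.
  set (D := d2 a1 a2 b1 b2) in *.
  assert (HD0 : 0 <= D) by apply d2_nonneg.
  assert (Hpt : exists p1 p2, d2 p1 p2 a1 a2 = R2 /\ d2 p1 p2 b1 b2 = R2).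
  { destruct (Req_dec D 0) as [D0|D0].
    - assert (b1 = a1 /\ b2 = a2) as [-> ->].
      { unfold D, d2 in D0. apply sumsq0 in D0. lra. }
      exists (a1 + Rr), a2. unfold d2. rewrite <- Rr_sq. split; ring.
    - set (t := sqrt ((R2 - D / 4) / D)).
      assert (Ht : t * t = (R2 - D / 4) / D) by (apply sqrt_sqrt; apply Rdiv_le_0_compat; lra).
      exists (a1 + (b1 - a1) / 2 - t * (b2 - a2)), (a2 + (b2 - a2) / 2 + t * (b1 - a1)).
      split.
      + transitivity (D / 4 + t * t * D). unfold D, d2; field.
        rewrite Ht. field. lra.
      + transitivity (D / 4 + t * t * D). unfold D, d2; field.
        rewrite Ht. field. lra. }
  destruct Hpt as [p1 [p2 [H1 H2]]].
  apply (hdisj i j Hij p1 p2). rewrite Ei, Ej. split; apply circle_support; auto.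
Qed.

Lemma inD_uniq i j u v : inD i u v -> inD j u v -> i = j.
Proof.
  intros Hi Hj. apply NNPP. intros N. generalize (DJ i j N).
  generalize (d2_par (fst (c i)) (snd (c i)) (fst (c j)) (snd (c j)) u v).
  unfold inD in *. lra.
Qed.

Lemma Phi_in i u v : inD i u v -> phi u v = translate2 psi (c i) u v.
Proof.
  intros Hi. destruct (hsum u v) as [[i' [Hn E]] | [Hz E]].
  - rewrite E. assert (i' = i) as -> by (apply (inD_uniq i' i u v); auto; apply T_nz; auto). auto.
  - rewrite E, Hz; auto.
Qed.

Lemma Phi_out u v : (forall j, ~ inD j u v) -> phi u v = 0.
Proof.
  intros Hn. destruct (hsum u v) as [[i' [Hz E]] | [_ E]]; auto.
  exfalso. apply (Hn i'). apply T_nz; auto.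
Qed.

Lemma three_pts (q1 q2 r1 r2 s1 s2 p1 p2 : R) :
  4 * R2 < d2 q1 q2 r1 r2 -> 4 * R2 < d2 q1 q2 s1 s2 -> 4 * R2 < d2 r1 r2 s1 s2 ->
  d2 q1 q2 p1 p2 < 121 / 100 * R2 -> d2 r1 r2 p1 p2 < 121 / 100 * R2 ->
  d2 s1 s2 p1 p2 < 121 / 100 * R2 -> False.
Proof.
  intros H1 H2 H3 H4 H5 H6.
  assert (E : d2 q1 q2 r1 r2 + d2 q1 q2 s1 s2 + d2 r1 r2 s1 s2 =
     3 * (d2 q1 q2 p1 p2 + d2 r1 r2 p1 p2 + d2 s1 s2 p1 p2) -
     ((q1 + r1 + s1 - 3 * p1) * (q1 + r1 + s1 - 3 * p1) + (q2 + r2 + s2 - 3 * p2) * (q2 + r2 + s2 - 3 * p2)))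
    by (unfold d2; ring).
  generalize (Rle_0_sqr (q1 + r1 + s1 - 3 * p1)) (Rle_0_sqr (q2 + r2 + s2 - 3 * p2)). unfold Rsqr.
  generalize R2_pos. lra.
Qed.

Definition cx (j : I) := fst (c j).
Definition cy (j : I) := snd (c j).

Lemma inD_sqrt j p1 p2 : inD j p1 p2 <-> sqrt (d2 (cx j) (cy j) p1 p2) <= Rr.
Proof.
  unfold inD, cx, cy. rewrite d2_sym. split; intros H.
  - unfold Rr. apply sqrt_le_1_alt; auto.
  - assert (K := sqrt_sqrt _ (d2_nonneg (fst (c j)) (snd (c j)) p1 p2)).
    rewrite <- K, <- Rr_sq. apply Rmult_le_compat; auto; apply sqrt_pos.
Qed.

Lemma LF p1 p2 : exists e, 0 < e /\ forall j u v, d2 u v p1 p2 < e * e -> inD j u v -> inD j p1 p2.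
Proof.
  assert (HR := R2_pos). assert (HRr := Rr_pos). assert (HRs := Rr_sq).
  set (sd := fun j => sqrt (d2 (cx j) (cy j) p1 p2)).
  set (del := Rr / 10).
  assert (Hdel : 0 < del) by (unfold del; lra).
  assert (Tri : forall e j u v, 0 < e -> d2 u v p1 p2 < e * e -> inD j u v -> sd j < Rr + e).
  { intros e j u v He H1 H2. unfold sd.
    eapply Rle_lt_trans. apply (d2_tri _ _ u v).
    apply Rplus_le_lt_compat.
    - rewrite d2_sym. unfold Rr. apply sqrt_le_1_alt. exact H2.
    - rewrite <- (sqrt_square e) by lra. apply sqrt_lt_1_alt. split; auto. apply d2_nonneg. }
  assert (Sq : forall j, sd j < Rr + del -> d2 (cx j) (cy j) p1 p2 < 121 / 100 * R2).
  { intros j Hj. unfold sd in Hj.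
    assert (K := sqrt_sqrt _ (d2_nonneg (cx j) (cy j) p1 p2)).
    assert (0 <= sqrt (d2 (cx j) (cy j) p1 p2)) by apply sqrt_pos.
    rewrite <- K. rewrite <- HRs. unfold del in Hj. nra. }
  assert (Dist : forall i j, i <> j -> 4 * R2 < d2 (cx i) (cy i) (cx j) (cy j)).
  { intros i j H. apply DJ; auto. }
  set (S := fun j => Rr < sd j /\ sd j < Rr + del).
  assert (Out : forall j, ~ S j -> forall e, e <= del -> sd j < Rr + e -> inD j p1 p2).
  { intros j Hj e He Hs. apply inD_sqrt. fold (sd j).
    destruct (Rle_lt_dec (sd j) Rr); auto. exfalso; apply Hj; split; auto. lra. }
  destruct (classic (exists j, S j)) as [[j1 Hj1] | N].
  - destruct (classic (exists j, S j /\ c j <> c j1)) as [[j2 [Hj2 Hne]] | N2].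
    + exists (Rmin del (Rmin (sd j1 - Rr) (sd j2 - Rr))).
      assert (Hm : 0 < Rmin del (Rmin (sd j1 - Rr) (sd j2 - Rr))).
      { apply Rmin_pos; auto. apply Rmin_pos; destruct Hj1, Hj2; lra. }
      split; auto. intros j u v Hd Hin.
      assert (Tj := Tri _ j u v Hm Hd Hin).
      assert (M1 := Rmin_l del (Rmin (sd j1 - Rr) (sd j2 - Rr))).
      assert (M2 := Rmin_r del (Rmin (sd j1 - Rr) (sd j2 - Rr))).
      assert (M3 := Rmin_l (sd j1 - Rr) (sd j2 - Rr)).
      assert (M4 := Rmin_r (sd j1 - Rr) (sd j2 - Rr)).
      destruct (classic (S j)) as [Sj|Sj]; [|eapply Out; eauto].
      exfalso.
      destruct (classic (c j = c j1)) as [E1|E1].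
      { assert (sd j = sd j1) by (unfold sd, cx, cy; rewrite E1; auto). lra. }
      destruct (classic (c j = c j2)) as [E2|E2].
      { assert (sd j = sd j2) by (unfold sd, cx, cy; rewrite E2; auto). lra. }
      assert (n1 : j <> j1) by (intros ->; auto).
      assert (n2 : j <> j2) by (intros ->; auto).
      assert (n12 : j1 <> j2) by (intros ->; auto).
      apply (three_pts (cx j) (cy j) (cx j1) (cy j1) (cx j2) (cy j2) p1 p2); auto.
      apply Sq; apply Sj. apply Sq; apply Hj1. apply Sq; apply Hj2.
    + exists (Rmin del (sd j1 - Rr)).
      assert (Hm : 0 < Rmin del (sd j1 - Rr)).
      { apply Rmin_pos; auto. destruct Hj1; lra. }
      split; auto. intros j u v Hd Hin.
      assert (Tj := Tri _ j u v Hm Hd Hin).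
      assert (M1 := Rmin_l del (sd j1 - Rr)).
      assert (M2 := Rmin_r del (sd j1 - Rr)).
      destruct (classic (S j)) as [Sj|Sj]; [|eapply Out; eauto].
      exfalso.
      assert (E1 : c j = c j1) by (apply NNPP; intros Hn; apply N2; exists j; auto).
      assert (sd j = sd j1) by (unfold sd, cx, cy; rewrite E1; auto). lra.
  - exists del. split; auto. intros j u v Hd Hin.
    apply (Out j (fun h => N (ex_intro _ j h)) del); [lra|]. apply (Tri _ j u v Hdel Hd Hin).
Qed.

Hypothesis hphi_smooth : smooth2 phi.

Lemma phi_C1 : C1f phi. Proof. apply smooth2_C1; auto. Qed.
Lemma phi1_C1 : C1f (D1 phi). Proof. apply smooth2_C1, smooth2_D1; auto. Qed.
Lemma phi2_C1 : C1f (D2 phi). Proof. apply smooth2_C1, smooth2_D2; auto. Qed.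

Lemma D_const0 p1 p2 : D1 (fun _ _ => 0) p1 p2 = 0 /\ D2 (fun _ _ => 0) p1 p2 = 0.
Proof. unfold D1, D2. rewrite !Derive_const. auto. Qed.

Lemma LocB p1 p2 : (forall j, ~ inD j p1 p2) ->
  exists d, 0 < d /\ forall u v, sq p1 p2 d u v -> (forall j, ~ inD j u v) /\ phi u v = 0.
Proof.
  intros Hn. destruct (LF p1 p2) as [e [He HL]].
  exists (e / 2). split. lra. intros u v Huv.
  assert (Hd := sq_d2 _ _ _ _ _ He Huv).
  assert (Hu : forall j, ~ inD j u v) by (intros j Hj; apply (Hn j); eapply HL; eauto).
  split; auto. apply Phi_out; auto.
Qed.

Lemma LocB_D p1 p2 : (forall j, ~ inD j p1 p2) -> D1 phi p1 p2 = 0 /\ D2 phi p1 p2 = 0.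
Proof.
  intros Hn. destruct (LocB p1 p2 Hn) as [d [Hd H]].
  split.
  - rewrite (sq_D1 phi (fun _ _ => 0) p1 p2 d Hd). apply D_const0. intros; apply H; auto.
  - rewrite (sq_D2 phi (fun _ _ => 0) p1 p2 d Hd). apply D_const0. intros; apply H; auto.
Qed.

Lemma Rot i w1 w2 : inD i w1 w2 -> (w1 - cx i) * D2 phi w1 w2 - (w2 - cy i) * D1 phi w1 w2 = 0.
Proof.
  intros Hi.
  set (z1 := w1 - cx i). set (z2 := w2 - cy i).
  set (f := fun t => phi (cx i + (cos t * z1 - sin t * z2)) (cy i + (sin t * z1 + cos t * z2))).
  assert (Fc : forall t, f t = psi z1 z2).
  { intros t. unfold f. rewrite (Phi_in i).
    - unfold translate2. fold (cx i) (cy i).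
      replace (cx i + (cos t * z1 - sin t * z2) - cx i) with (cos t * z1 - sin t * z2) by ring.
      replace (cy i + (sin t * z1 + cos t * z2) - cy i) with (sin t * z1 + cos t * z2) by ring.
      apply hpsi_rad. generalize (sin2_cos2 t); unfold Rsqr; intros; nra.
    - unfold inD. fold (cx i) (cy i).
      replace (d2 (cx i + (cos t * z1 - sin t * z2)) (cy i + (sin t * z1 + cos t * z2)) (cx i) (cy i))
        with (d2 w1 w2 (cx i) (cy i)). exact Hi.
      unfold d2. fold z1 z2. generalize (sin2_cos2 t); unfold Rsqr; intros; nra. }
  assert (D0 : Derive f 0 = 0).
  { rewrite (Derive_ext f (fun _ => psi z1 z2)) by auto. apply Derive_const. }
  assert (D1' : Derive f 0 = D1 phi w1 w2 * (- z2) + D2 phi w1 w2 * z1).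
  { apply is_derive_unique. apply is_derive_Reals. unfold f.
    apply (derivable_pt_lim_comp_2d phi (fun t => cx i + (cos t * z1 - sin t * z2))
             (fun t => cy i + (sin t * z1 + cos t * z2))).
    - rewrite cos_0, sin_0. replace (cx i + (1 * z1 - 0 * z2)) with w1 by (unfold z1; ring).
      replace (cy i + (0 * z1 + 1 * z2)) with w2 by (unfold z2; ring).
      apply C1f_dpl, phi_C1.
    - apply is_derive_Reals. auto_derive; auto. rewrite cos_0, sin_0. ring.
    - apply is_derive_Reals. auto_derive; auto. rewrite cos_0, sin_0. ring. }
  rewrite D0 in D1'. fold z1 z2. lra.
Qed.

Lemma LocA i p1 p2 : inD i p1 p2 ->
  exists d, 0 < d /\ forall u v, sq p1 p2 d u v ->
    (forall j, inD j u v -> j = i) /\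
    (u - cx i) * D2 phi u v - (v - cy i) * D1 phi u v = 0 /\
    (~ inD i u v -> D1 phi u v = 0 /\ D2 phi u v = 0).
Proof.
  intros Hi. destruct (LF p1 p2) as [e [He HL]].
  exists (e / 2). split. lra. intros u v Huv.
  assert (Hd := sq_d2 _ _ _ _ _ He Huv).
  assert (U : forall j, inD j u v -> j = i).
  { intros j Hj. apply (inD_uniq j i p1 p2); auto. eapply HL; eauto. }
  assert (Z : ~ inD i u v -> D1 phi u v = 0 /\ D2 phi u v = 0).
  { intros Hn. apply LocB_D. intros j Hj. apply Hn. rewrite <- (U j Hj). auto. }
  split; auto. split; auto.
  destruct (classic (inD i u v)) as [Hin|Hn]. apply Rot; auto.
  destruct (Z Hn) as [-> ->]. ring.
Qed.

Lemma IdA i p1 p2 : inD i p1 p2 ->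
  D2 phi p1 p2 + (p1 - cx i) * D1 (D2 phi) p1 p2 - (p2 - cy i) * D1 (D1 phi) p1 p2 = 0 /\
  (p1 - cx i) * D2 (D2 phi) p1 p2 - D1 phi p1 p2 - (p2 - cy i) * D2 (D1 phi) p1 p2 = 0.
Proof.
  intros Hi. destruct (LocA i p1 p2 Hi) as [d [Hd H]].
  set (J := fun u v => (u - cx i) * D2 phi u v - (v - cy i) * D1 phi u v).
  assert (E : forall u v, sq p1 p2 d u v -> J u v = (fun _ _ => 0) u v) by (intros; apply H; auto).
  assert (P1 := phi1_C1). assert (P2 := phi2_C1).
  split.
  - assert (K := sq_D1 J _ p1 p2 d Hd E). rewrite (proj1 (D_const0 p1 p2)) in K.
    rewrite <- K. symmetry. unfold D1 at 1. unfold J. apply is_derive_unique.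
    auto_derive.
    + split. apply (C1f_ex1 (D2 phi)); auto. split; auto. apply (C1f_ex1 (D1 phi)); auto.
    + change (Derive (fun x : R => D2 phi x p2) p1) with (D1 (D2 phi) p1 p2).
      change (Derive (fun x : R => D1 phi x p2) p1) with (D1 (D1 phi) p1 p2). ring.
  - assert (K := sq_D2 J _ p1 p2 d Hd E). rewrite (proj2 (D_const0 p1 p2)) in K.
    rewrite <- K. symmetry. unfold D2 at 1. unfold J. apply is_derive_unique.
    auto_derive.
    + split. apply (C1f_ex2 (D2 phi)); auto. split; auto. apply (C1f_ex2 (D1 phi)); auto.
    + change (Derive (fun x : R => D2 phi p1 x) p2) with (D2 (D2 phi) p1 p2).
      change (Derive (fun x : R => D1 phi p1 x) p2) with (D2 (D1 phi) p1 p2). ring.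
Qed.

Definition cf (u v : R) : R * R :=
  match excluded_middle_informative (exists j, inD j u v) with
  | left H => c (proj1_sig (constructive_indefinite_description _ H))
  | right _ => (u, v)
  end.

Lemma cf_in j u v : inD j u v -> cf u v = c j.
Proof.
  intros Hj. unfold cf. destruct (excluded_middle_informative _) as [H|H].
  - destruct (constructive_indefinite_description _ H) as [j' Hj']. simpl.
    rewrite (inD_uniq j' j u v); auto.
  - exfalso; apply H; exists j; auto.
Qed.

Lemma cf_out u v : (forall j, ~ inD j u v) -> cf u v = (u, v).
Proof.
  intros Hn. unfold cf. destruct (excluded_middle_informative _) as [H|H]; auto.
  destruct H as [j Hj]. exfalso; apply (Hn j Hj).
Qed.

Lemma cross0 z1 z2 e1 e2 g1 g2 : z1 * g2 - z2 * g1 = 0 -> e1 * g2 - e2 * g1 = 0 ->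
  ~ (g1 = 0 /\ g2 = 0) -> z1 * e2 - z2 * e1 = 0.
Proof.
  intros H1 H2 Hg.
  assert (E1 : (z1 * e2 - z2 * e1) * g1 = 0).
  { transitivity (z1 * (e2 * g1) - e1 * (z2 * g1)). ring.
    replace (e2 * g1) with (e1 * g2) by lra. replace (z2 * g1) with (z1 * g2) by lra. ring. }
  assert (E2 : (z1 * e2 - z2 * e1) * g2 = 0).
  { transitivity (e2 * (z1 * g2) - z2 * (e1 * g2)). ring.
    replace (e1 * g2) with (e2 * g1) by lra. replace (z1 * g2) with (z2 * g1) by lra. ring. }
  destruct (Req_dec g1 0) as [G1|G1].
  - destruct (Req_dec g2 0) as [G2|G2]. exfalso; auto.
    apply Rmult_integral in E2. destruct E2; auto. contradiction.
  - apply Rmult_integral in E1. destruct E1; auto. contradiction.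
Qed.

Lemma grad_nz_loc u v : ~ (D1 phi u v = 0 /\ D2 phi u v = 0) ->
  exists d, 0 < d /\ forall w1 w2, sq u v d w1 w2 -> ~ (D1 phi w1 w2 = 0 /\ D2 phi w1 w2 = 0).
Proof.
  intros Hg. destruct (Req_dec (D1 phi u v) 0) as [G1|G1].
  - assert (G2 : D2 phi u v <> 0) by (intros G2; apply Hg; auto).
    destruct (continuity_2d_pt_neq_0 _ _ _ (cont2_2d _ (C1f_c2 _ phi_C1) u v) G2) as [d Hd].
    exists d. split. apply cond_pos. intros w1 w2 [H1 H2] [_ K]. apply (Hd w1 w2); auto.
  - destruct (continuity_2d_pt_neq_0 _ _ _ (cont2_2d _ (C1f_c1 _ phi_C1) u v) G1) as [d Hd].
    exists d. split. apply cond_pos. intros w1 w2 [H1 H2] [K _]. apply (Hd w1 w2); auto.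
Qed.

Lemma CL a b i j u v : (forall u v, phi (u + a) (v + b) = phi u v) ->
  inD i u v -> inD j (u + a) (v + b) -> ~ (D1 phi u v = 0 /\ D2 phi u v = 0) ->
  cx j = cx i + a /\ cy j = cy i + b.
Proof.
  intros Hp Hi Hj Hg.
  destruct (LocA i u v Hi) as [d1 [Hd1 L1]].
  destruct (LocA j (u + a) (v + b) Hj) as [d2 [Hd2 L2]].
  destruct (grad_nz_loc u v Hg) as [d3 [Hd3 L3]].
  set (t := Rmin d1 (Rmin d2 d3) / 2).
  assert (Ht : 0 < t) by (unfold t; generalize (Rmin_pos d1 (Rmin d2 d3) Hd1 (Rmin_pos _ _ Hd2 Hd3)); lra).
  assert (Ht1 : t < d1) by (unfold t; generalize (Rmin_l d1 (Rmin d2 d3)) (Rmin_pos d1 (Rmin d2 d3) Hd1 (Rmin_pos _ _ Hd2 Hd3)); lra).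
  assert (Ht2 : t < d2) by (unfold t; generalize (Rmin_r d1 (Rmin d2 d3)) (Rmin_l d2 d3) (Rmin_pos d1 (Rmin d2 d3) Hd1 (Rmin_pos _ _ Hd2 Hd3)); lra).
  assert (Ht3 : t < d3) by (unfold t; generalize (Rmin_r d1 (Rmin d2 d3)) (Rmin_r d2 d3) (Rmin_pos d1 (Rmin d2 d3) Hd1 (Rmin_pos _ _ Hd2 Hd3)); lra).
  assert (Key : forall w1 w2, Rabs (w1 - u) <= t -> Rabs (w2 - v) <= t ->
     (w1 - cx i) * (w2 + b - cy j) - (w2 - cy i) * (w1 + a - cx j) = 0).
  { intros w1 w2 H1 H2.
    assert (S1 : sq u v d1 w1 w2) by (split; lra).
    assert (S3 : sq u v d3 w1 w2) by (split; lra).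
    assert (S2 : sq (u + a) (v + b) d2 (w1 + a) (w2 + b)).
    { split; [replace (w1 + a - (u + a)) with (w1 - u) by ring | replace (w2 + b - (v + b)) with (w2 - v) by ring]; lra. }
    destruct (L1 w1 w2 S1) as [_ [J1 _]].
    destruct (L2 (w1 + a) (w2 + b) S2) as [_ [J2 _]].
    rewrite (D1_per phi a b Hp), (D2_per phi a b Hp) in J2.
    apply (cross0 _ _ _ _ (D1 phi w1 w2) (D2 phi w1 w2)); auto. }
  assert (E0 := Key u v ltac:(rewrite Rminus_diag, Rabs_R0; lra) ltac:(rewrite Rminus_diag, Rabs_R0; lra)).
  assert (E1 := Key (u + t) v ltac:(replace (u + t - u) with t by ring; rewrite Rabs_right; lra)
                              ltac:(rewrite Rminus_diag, Rabs_R0; lra)).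
  assert (E2 := Key u (v + t) ltac:(rewrite Rminus_diag, Rabs_R0; lra)
                              ltac:(replace (v + t - v) with t by ring; rewrite Rabs_right; lra)).
  assert (Q1 : t * (b - cy j + cy i) = 0) by lra.
  assert (Q2 : t * (a - cx j + cx i) = 0) by lra.
  apply Rmult_integral in Q1. apply Rmult_integral in Q2.
  destruct Q1; destruct Q2; split; lra.
Qed.

Section KA.
Variable A : R -> R -> R.
Hypothesis hA : C1f A.
Hypothesis hA0 : forall u v, D1 phi u v = 0 -> D2 phi u v = 0 -> A u v = 0.

Definition K1 (u v : R) : R := A u v * (v - snd (cf u v)).
Definition K2 (u v : R) : R := A u v * (u - fst (cf u v)).

Lemma KLoc p1 p2 :
  ((forall j, ~ inD j p1 p2) /\ exists d, 0 < d /\ forall u v, sq p1 p2 d u v -> K1 u v = 0 /\ K2 u v = 0)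
  \/ (exists i, inD i p1 p2 /\ exists d, 0 < d /\ forall u v, sq p1 p2 d u v ->
        K1 u v = A u v * (v - cy i) /\ K2 u v = A u v * (u - cx i)).
Proof.
  destruct (classic (exists i, inD i p1 p2)) as [[i Hi]|N].
  - right. exists i. split; auto. destruct (LocA i p1 p2 Hi) as [d [Hd L]].
    exists d. split; auto. intros u v Huv. destruct (L u v Huv) as [U [_ Z]].
    unfold K1, K2. destruct (classic (inD i u v)) as [Hin|Hn].
    + rewrite (cf_in i u v Hin). auto.
    + rewrite cf_out. simpl. destruct (Z Hn) as [Z1 Z2]. rewrite (hA0 u v Z1 Z2). split; ring.
      intros j Hj. apply Hn. rewrite <- (U j Hj); auto.
  - left. assert (Hn : forall j, ~ inD j p1 p2) by (intros j Hj; apply N; exists j; auto).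
    split; auto. destruct (LocB p1 p2 Hn) as [d [Hd L]].
    exists d. split; auto. intros u v Huv. destruct (L u v Huv) as [U _].
    unfold K1, K2. rewrite cf_out by auto. simpl. split; ring.
Qed.

Lemma C1f_vc a : C1f (fun u v => A u v * (v - a)).
Proof.
  apply C1f_mult; auto. apply (C1f_ext (fun u v => (- a) + u * 0 + v * 1)). intros; ring. apply C1f_lin.
Qed.
Lemma C1f_uc a : C1f (fun u v => A u v * (u - a)).
Proof.
  apply C1f_mult; auto. apply (C1f_ext (fun u v => (- a) + u * 1 + v * 0)). intros; ring. apply C1f_lin.
Qed.

Lemma K1_C1 : C1f K1.
Proof.
  apply loc_C1. intros p1 p2. destruct (KLoc p1 p2) as [[_ [d [Hd H]]] | [i [_ [d [Hd H]]]]].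
  - exists (fun _ _ => 0), d. split; auto. split. apply C1f_const. intros; apply H; auto.
  - exists (fun u v => A u v * (v - cy i)), d. split; auto. split. apply C1f_vc. intros; apply H; auto.
Qed.
Lemma K2_C1 : C1f K2.
Proof.
  apply loc_C1. intros p1 p2. destruct (KLoc p1 p2) as [[_ [d [Hd H]]] | [i [_ [d [Hd H]]]]].
  - exists (fun _ _ => 0), d. split; auto. split. apply C1f_const. intros; apply H; auto.
  - exists (fun u v => A u v * (u - cx i)), d. split; auto. split. apply C1f_uc. intros; apply H; auto.
Qed.

Lemma Kdiv p1 p2 :
  ((forall j, ~ inD j p1 p2) /\ D2 K2 p1 p2 - D1 K1 p1 p2 = 0)
  \/ (exists i, inD i p1 p2 /\
        D2 K2 p1 p2 - D1 K1 p1 p2 = (p1 - cx i) * D2 A p1 p2 - (p2 - cy i) * D1 A p1 p2).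
Proof.
  destruct (KLoc p1 p2) as [[Hn [d [Hd H]]] | [i [Hi [d [Hd H]]]]].
  - left. split; auto.
    rewrite (sq_D1 K1 (fun _ _ => 0) p1 p2 d Hd) by (intros; apply H; auto).
    rewrite (sq_D2 K2 (fun _ _ => 0) p1 p2 d Hd) by (intros; apply H; auto).
    rewrite (proj1 (D_const0 p1 p2)), (proj2 (D_const0 p1 p2)). ring.
  - right. exists i. split; auto.
    rewrite (sq_D1 K1 (fun u v => A u v * (v - cy i)) p1 p2 d Hd) by (intros; apply H; auto).
    rewrite (sq_D2 K2 (fun u v => A u v * (u - cx i)) p1 p2 d Hd) by (intros; apply H; auto).
    unfold D1 at 1, D2 at 1. rewrite !Derive_scal_l. change (Derive (A p1) p2) with (D2 A p1 p2). change (Derive (fun x : R => A x p2) p1) with (D1 A p1 p2). ring.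
Qed.

Lemma K_per a b : (forall u v, phi (u + a) (v + b) = phi u v) ->
  (forall u v, A (u + a) (v + b) = A u v) ->
  (forall u v, K1 (u + a) (v + b) = K1 u v) /\ (forall u v, K2 (u + a) (v + b) = K2 u v).
Proof.
  intros Hp HAp.
  assert (Main : forall u v, A u v <> 0 -> cf (u + a) (v + b) = (fst (cf u v) + a, snd (cf u v) + b)).
  { intros u v HA.
    assert (Hg : ~ (D1 phi u v = 0 /\ D2 phi u v = 0)) by (intros [G1 G2]; apply HA; apply hA0; auto).
    assert (Hg' : ~ (D1 phi (u + a) (v + b) = 0 /\ D2 phi (u + a) (v + b) = 0))
      by (rewrite (D1_per phi a b Hp), (D2_per phi a b Hp); auto).
    destruct (classic (exists i, inD i u v)) as [[i Hi]|N].
    2:{ exfalso. apply Hg. apply LocB_D. intros j Hj; apply N; exists j; auto. }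
    destruct (classic (exists j, inD j (u + a) (v + b))) as [[j Hj]|N].
    2:{ exfalso. apply Hg'. apply LocB_D. intros j Hj; apply N; exists j; auto. }
    rewrite (cf_in j _ _ Hj), (cf_in i _ _ Hi).
    destruct (CL a b i j u v Hp Hi Hj Hg) as [E1 E2]. unfold cx, cy in *.
    destruct (c j) as [x y]. simpl in *. rewrite E1, E2. auto. }
  split; intros u v; unfold K1, K2; rewrite HAp;
    (destruct (Req_dec (A u v) 0) as [Z|Z]; [rewrite Z; ring | rewrite (Main u v Z); simpl; ring]).
Qed.
End KA.

Lemma Schwarz_phi p1 p2 : D1 (D2 phi) p1 p2 = D2 (D1 phi) p1 p2.
Proof.
  unfold D1, D2.
  apply Schwarz.
  - exists (mkposreal 1 Rlt_0_1). intros u v _ _.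
    split. apply (hphi_smooth nil u v).
    split. apply (hphi_smooth nil u v).
    split. apply (hphi_smooth (false :: nil) u v).
    apply (hphi_smooth (true :: nil) u v).
  - apply (cont2_2d (D1 (D2 phi))). apply smooth2_cont, smooth2_D1, smooth2_D2; auto.
  - apply (cont2_2d (D2 (D1 phi))). apply smooth2_cont, smooth2_D2, smooth2_D1; auto.
Qed.

Definition A1 : R -> R -> R := fun u v => D1 phi u v * D2 phi u v.
Definition A2 : R -> R -> R := fun u v => D1 phi u v * D1 phi u v - D2 phi u v * D2 phi u v.

Lemma A1_C1 : C1f A1.
Proof. apply C1f_mult; [apply phi1_C1 | apply phi2_C1]. Qed.
Lemma A2_C1 : C1f A2.
Proof.
  apply (C1f_ext (fun u v => D1 phi u v * D1 phi u v + (-1) * (D2 phi u v * D2 phi u v))).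
  intros; unfold A2; ring.
  apply C1f_plus. apply C1f_mult; apply phi1_C1. apply C1f_scal; apply C1f_mult; apply phi2_C1.
Qed.
Lemma A1_0 u v : D1 phi u v = 0 -> D2 phi u v = 0 -> A1 u v = 0.
Proof. intros H1 H2; unfold A1; rewrite H1, H2; ring. Qed.
Lemma A2_0 u v : D1 phi u v = 0 -> D2 phi u v = 0 -> A2 u v = 0.
Proof. intros H1 H2; unfold A2; rewrite H1, H2; ring. Qed.

Lemma dA1 p1 p2 : D1 A1 p1 p2 = D1 (D1 phi) p1 p2 * D2 phi p1 p2 + D1 phi p1 p2 * D1 (D2 phi) p1 p2 /\
                  D2 A1 p1 p2 = D2 (D1 phi) p1 p2 * D2 phi p1 p2 + D1 phi p1 p2 * D2 (D2 phi) p1 p2.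
Proof.
  assert (P1 := phi1_C1). assert (P2 := phi2_C1).
  split.
  - unfold D1 at 1, A1. apply is_derive_unique. auto_derive.
    + split. apply (C1f_ex1 (D1 phi)); auto. split; auto. apply (C1f_ex1 (D2 phi)); auto.
    + change (Derive (fun x : R => D1 phi x p2) p1) with (D1 (D1 phi) p1 p2).
      change (Derive (fun x : R => D2 phi x p2) p1) with (D1 (D2 phi) p1 p2). ring.
  - unfold D2 at 1, A1. apply is_derive_unique. auto_derive.
    + split. apply (C1f_ex2 (D1 phi)); auto. split; auto. apply (C1f_ex2 (D2 phi)); auto.
    + change (Derive (fun x : R => D1 phi p1 x) p2) with (D2 (D1 phi) p1 p2).
      change (Derive (fun x : R => D2 phi p1 x) p2) with (D2 (D2 phi) p1 p2). ring.
Qed.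

Lemma dA2 p1 p2 : D1 A2 p1 p2 = 2 * D1 phi p1 p2 * D1 (D1 phi) p1 p2 - 2 * D2 phi p1 p2 * D1 (D2 phi) p1 p2 /\
                  D2 A2 p1 p2 = 2 * D1 phi p1 p2 * D2 (D1 phi) p1 p2 - 2 * D2 phi p1 p2 * D2 (D2 phi) p1 p2.
Proof.
  assert (P1 := phi1_C1). assert (P2 := phi2_C1).
  assert (e11 := C1f_ex1 (D1 phi) p1 p2 P1). assert (e12 := C1f_ex1 (D2 phi) p1 p2 P2).
  assert (e21 := C1f_ex2 (D1 phi) p1 p2 P1). assert (e22 := C1f_ex2 (D2 phi) p1 p2 P2).
  split.
  - unfold D1 at 1, A2. apply is_derive_unique. auto_derive.
    + repeat split; assumption.
    + change (Derive (fun x : R => D1 phi x p2) p1) with (D1 (D1 phi) p1 p2).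
      change (Derive (fun x : R => D2 phi x p2) p1) with (D1 (D2 phi) p1 p2). ring.
  - unfold D2 at 1, A2. apply is_derive_unique. auto_derive.
    + repeat split; assumption.
    + change (Derive (fun x : R => D1 phi p1 x) p2) with (D2 (D1 phi) p1 p2).
      change (Derive (fun x : R => D2 phi p1 x) p2) with (D2 (D2 phi) p1 p2). ring.
Qed.

Lemma div1 p1 p2 : D2 (K2 A1) p1 p2 - D1 (K1 A1) p1 p2 =
   D1 phi p1 p2 * D1 phi p1 p2 - D2 phi p1 p2 * D2 phi p1 p2.
Proof.
  destruct (Kdiv A1 A1_0 p1 p2) as [[Hn E] | [i [Hi E]]]; rewrite E.
  - destruct (LocB_D p1 p2 Hn) as [-> ->]. ring.
  - destruct (dA1 p1 p2) as [-> ->]. destruct (IdA i p1 p2 Hi) as [I1 I2].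
    rewrite <- Schwarz_phi in *.
    transitivity (D2 phi p1 p2 * ((p1 - cx i) * D1 (D2 phi) p1 p2 - (p2 - cy i) * D1 (D1 phi) p1 p2)
       + D1 phi p1 p2 * ((p1 - cx i) * D2 (D2 phi) p1 p2 - (p2 - cy i) * D1 (D2 phi) p1 p2)). ring.
    replace ((p1 - cx i) * D1 (D2 phi) p1 p2 - (p2 - cy i) * D1 (D1 phi) p1 p2) with (- D2 phi p1 p2) by lra.
    replace ((p1 - cx i) * D2 (D2 phi) p1 p2 - (p2 - cy i) * D1 (D2 phi) p1 p2) with (D1 phi p1 p2) by lra.
    ring.
Qed.

Lemma div2 p1 p2 : D2 (K2 A2) p1 p2 - D1 (K1 A2) p1 p2 = -4 * (D1 phi p1 p2 * D2 phi p1 p2).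
Proof.
  destruct (Kdiv A2 A2_0 p1 p2) as [[Hn E] | [i [Hi E]]]; rewrite E.
  - destruct (LocB_D p1 p2 Hn) as [-> ->]. ring.
  - destruct (dA2 p1 p2) as [-> ->]. destruct (IdA i p1 p2 Hi) as [I1 I2].
    rewrite <- Schwarz_phi in *.
    transitivity (2 * D1 phi p1 p2 * ((p1 - cx i) * D1 (D2 phi) p1 p2 - (p2 - cy i) * D1 (D1 phi) p1 p2)
       - 2 * D2 phi p1 p2 * ((p1 - cx i) * D2 (D2 phi) p1 p2 - (p2 - cy i) * D1 (D2 phi) p1 p2)). ring.
    replace ((p1 - cx i) * D1 (D2 phi) p1 p2 - (p2 - cy i) * D1 (D1 phi) p1 p2) with (- D2 phi p1 p2) by lra.
    replace ((p1 - cx i) * D2 (D2 phi) p1 p2 - (p2 - cy i) * D1 (D2 phi) p1 p2) with (D1 phi p1 p2) by lra.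
    ring.
Qed.

Lemma A_per (A : R -> R -> R) a b : (forall u v, phi (u + a) (v + b) = phi u v) ->
  (A = A1 \/ A = A2) -> forall u v, A (u + a) (v + b) = A u v.
Proof.
  intros Hp [-> | ->] u v; unfold A1, A2; rewrite (D1_per phi a b Hp), (D2_per phi a b Hp); auto.
Qed.

Lemma radial_nd a0 b0 a1 b1 a2 b2 :
  (forall u v, phi (u + a0) (v + b0) = phi u v) ->
  (forall u v, phi (u + a1) (v + b1) = phi u v) ->
  (forall u v, phi (u + a2) (v + b2) = phi u v) ->
  a0 * a0 + a1 * a1 + a2 * a2 = 1 -> b0 * b0 + b1 * b1 + b2 * b2 = 1 ->
  a0 * b0 + a1 * b1 + a2 * b2 = 0 ->
  P3 (fun u v => D1 phi u v * D1 phi u v - D2 phi u v * D2 phi u v) a0 b0 a1 b1 a2 b2 = 0 /\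
  P3 (fun u v => D1 phi u v * D2 phi u v) a0 b0 a1 b1 a2 b2 = 0.
Proof.
  intros H0 H1 H2 N11 N22 N12.
  assert (KK : forall A, (A = A1 \/ A = A2) -> C1f A ->
     (forall u v, D1 phi u v = 0 -> D2 phi u v = 0 -> A u v = 0) ->
     P3 (D1 (K1 A)) a0 b0 a1 b1 a2 b2 = 0 /\ P3 (D2 (K2 A)) a0 b0 a1 b1 a2 b2 = 0).
  { intros A HAe HA HA0.
    destruct (K_per A HA0 a0 b0 H0 (A_per A a0 b0 H0 HAe)) as [P10 P20].
    destruct (K_per A HA0 a1 b1 H1 (A_per A a1 b1 H1 HAe)) as [P11 P21].
    destruct (K_per A HA0 a2 b2 H2 (A_per A a2 b2 H2 HAe)) as [P12 P22].
    split.
    - apply KL_D1; auto. apply K1_C1; auto.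
    - apply KL_D2; auto. apply K2_C1; auto. }
  destruct (KK A1 (or_introl eq_refl) A1_C1 A1_0) as [Q1 Q2].
  destruct (KK A2 (or_intror eq_refl) A2_C1 A2_0) as [Q3 Q4].
  assert (c11 : cont2 (D1 (K1 A1))) by (apply C1f_c1, K1_C1; [apply A1_C1 | apply A1_0]).
  assert (c12 : cont2 (D2 (K2 A1))) by (apply C1f_c2, K2_C1; [apply A1_C1 | apply A1_0]).
  assert (c21 : cont2 (D1 (K1 A2))) by (apply C1f_c1, K1_C1; [apply A2_C1 | apply A2_0]).
  assert (c22 : cont2 (D2 (K2 A2))) by (apply C1f_c2, K2_C1; [apply A2_C1 | apply A2_0]).
  split.
  - rewrite (P3_ext _ (fun u v => D2 (K2 A1) u v + (-1) * D1 (K1 A1) u v)).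
    rewrite P3_plus, P3_scal, Q1, Q2; auto. ring. apply cont2_scal; auto.
    intros u v. rewrite <- div1. ring.
  - rewrite (P3_ext _ (fun u v => (-1/4) * (D2 (K2 A2) u v + (-1) * D1 (K1 A2) u v))).
    rewrite P3_scal, P3_plus, P3_scal, Q3, Q4; auto. ring. apply cont2_scal; auto.
    apply cont2_plus; auto. apply cont2_scal; auto.
    intros u v. replace (D2 (K2 A2) u v + -1 * D1 (K1 A2) u v) with (D2 (K2 A2) u v - D1 (K1 A2) u v) by ring.
    rewrite div2. field.
Qed.
End Geo.

Lemma radial_facts
  (xi xi1 xi2 : nat -> R) (horth : orthonormal3 xi xi1 xi2)
  (phi psi : R -> R -> R)
  (hpsi_smooth : smooth2 psi) (hpsi_cpt : compactly_supported2 psi)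
  (hpsi_rad : radial2 psi)
  (I : Type) (c : I -> R * R)
  (hdisj : forall i j : I, i <> j -> forall y1 y2,
      ~ (in_support2 (translate2 psi (c i)) y1 y2 /\
         in_support2 (translate2 psi (c j)) y1 y2))
  (hsum : forall y1 y2,
      (exists i : I, translate2 psi (c i) y1 y2 <> 0 /\
                     phi y1 y2 = translate2 psi (c i) y1 y2) \/
      ((forall i : I, translate2 psi (c i) y1 y2 = 0) /\ phi y1 y2 = 0))
  (hphi_smooth : smooth2 phi)
  (hper : periodic3 (fun x => phi (dot3 x xi1) (dot3 x xi2))) :
  P3 (fun u v => D1 phi u v * D1 phi u v - D2 phi u v * D2 phi u v)
     (xi1 0%nat) (xi2 0%nat) (xi1 1%nat) (xi2 1%nat) (xi1 2%nat) (xi2 2%nat) = 0 /\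
  P3 (fun u v => D1 phi u v * D2 phi u v)
     (xi1 0%nat) (xi2 0%nat) (xi1 1%nat) (xi2 1%nat) (xi1 2%nat) (xi2 2%nat) = 0.
Proof.
  assert (Pp := per_of_hper phi xi xi1 xi2 horth hper).
  destruct horth as [_ [N11 [N22 [_ [_ N12]]]]].
  unfold dot3, sum3 in N11, N22, N12.
  destruct (classic (exists z1 z2, psi z1 z2 <> 0)) as [Hnz | Hz].
  - apply (radial_nd psi phi I c); auto; intros; apply Pp; lia.
  - assert (Z : forall u v, phi u v = 0).
    { intros u v. destruct (hsum u v) as [[i [Hn _]] | [_ E]]; auto.
      exfalso. apply Hz. exists (u - fst (c i)), (v - snd (c i)). auto. }
    assert (Z1 : forall u v, D1 phi u v = 0).
    { intros; unfold D1. rewrite (Derive_ext _ (fun _ => 0)) by auto. apply Derive_const. }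
    assert (Z2 : forall u v, D2 phi u v = 0).
    { intros; unfold D2. rewrite (Derive_ext _ (fun _ => 0)) by auto. apply Derive_const. }
    split.
    + rewrite (P3_ext _ (fun u v => 0 * (fun _ _ => 0) u v)).
      rewrite P3_scal. ring. apply cont2_const.
      intros; rewrite Z1, Z2; ring.
    + rewrite (P3_ext _ (fun u v => 0 * (fun _ _ => 0) u v)).
      rewrite P3_scal. ring. apply cont2_const.
      intros; rewrite Z1, Z2; ring.
Qed.

Theorem lemma6p2
  (xi xi1 xi2 : nat -> R) (horth : orthonormal3 xi xi1 xi2)
  (phi psi : R -> R -> R)
  (hpsi_smooth : smooth2 psi) (hpsi_cpt : compactly_supported2 psi)
  (hpsi_rad : radial2 psi)
  (I : Type) (c : I -> R * R)
  (hdisj : forall i j : I, i <> j -> forall y1 y2,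
      ~ (in_support2 (translate2 psi (c i)) y1 y2 /\
         in_support2 (translate2 psi (c j)) y1 y2))
  (hsum : forall y1 y2,
      (exists i : I, translate2 psi (c i) y1 y2 <> 0 /\
                     phi y1 y2 = translate2 psi (c i) y1 y2) \/
      ((forall i : I, translate2 psi (c i) y1 y2 = 0) /\ phi y1 y2 = 0))
  (hphi_smooth : smooth2 phi)
  (hper : periodic3 (fun x => phi (dot3 x xi1) (dot3 x xi2))) :
  let rho := fun x : nat -> R => phi (dot3 x xi1) (dot3 x xi2) in
  let W := fun (k : nat) (x : nat -> R) => rho x * xi k in
  let C := torus_int (fun x => sum3 (fun m => (partial m rho x) ^ 2)) in
  forall k l : nat, (k < 3)%nat -> (l < 3)%nat ->
    torus_int (fun x =>
        W k x * sum3 (fun m => partial m (partial m (W l)) x)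
        + sum3 (fun j => partial k (W j) x * partial l (W j) x))
    = C / 2 * (delta k l - 3 * xi k * xi l).
Proof.
  intros rho W C k l Hk Hl.
  destruct (radial_facts xi xi1 xi2 horth phi psi hpsi_smooth hpsi_cpt hpsi_rad I c hdisj hsum
     hphi_smooth hper) as [R1 R2].
  assert (Hrow := row_orth xi xi1 xi2 k l horth Hk Hl).
  assert (Pp := per_of_hper phi xi xi1 xi2 horth hper).
  destruct horth as [Nxx [N11 [N22 [_ [_ N12]]]]].
  unfold dot3, sum3 in Nxx, N11, N22, N12.
  assert (S0 : C1f phi) by (apply smooth2_C1; auto).
  assert (S1 : C1f (D1 phi)) by (apply smooth2_C1, smooth2_D1; auto).
  assert (S2 : C1f (D2 phi)) by (apply smooth2_C1, smooth2_D2; auto).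
  assert (L1 : forall m x, (m < 3)%nat -> partial m rho x =
     dirD phi (xi1 m) (xi2 m) (dot3 x xi1) (dot3 x xi2)).
  { intros m x Hm. unfold rho. rewrite partial_chain; auto. }
  assert (L2 : forall m j x, (m < 3)%nat -> partial m (W j) x =
     dirD phi (xi1 m) (xi2 m) (dot3 x xi1) (dot3 x xi2) * xi j).
  { intros m j x Hm. unfold W. rewrite partial_scal_r. rewrite L1; auto. }
  assert (L3 : forall m x, (m < 3)%nat -> partial m (partial m (W l)) x =
     (D1 (dirD phi (xi1 m) (xi2 m)) (dot3 x xi1) (dot3 x xi2) * xi1 m +
      D2 (dirD phi (xi1 m) (xi2 m)) (dot3 x xi1) (dot3 x xi2) * xi2 m) * xi l).
  { intros m x Hm.
    replace (partial m (W l)) with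
      (fun x => (fun x => dirD phi (xi1 m) (xi2 m) (dot3 x xi1) (dot3 x xi2)) x * xi l).
    rewrite partial_scal_r. rewrite partial_chain; auto. apply C1f_dirD; auto.
    apply functional_extensionality; intro y. rewrite L2; auto. }
  set (p1 := D1 phi) in *. set (p2 := D2 phi) in *.
  set (q11 := D1 p1). set (q22 := D2 p2).
  set (k1 := fun u v => xi k * xi l * (phi u v * q11 u v) + (xi k * xi l * (phi u v * q22 u v) +
     (xi1 k * xi1 l * (p1 u v * p1 u v) + ((xi1 k * xi2 l + xi2 k * xi1 l) * (p1 u v * p2 u v)
      + xi2 k * xi2 l * (p2 u v * p2 u v))))).
  assert (EL : (fun x =>
        W k x * sum3 (fun m => partial m (partial m (W l)) x)
        + sum3 (fun j => partial k (W j) x * partial l (W j) x)) =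
        (fun x => k1 (dot3 x xi1) (dot3 x xi2))).
  { apply functional_extensionality; intro x. unfold sum3.
    rewrite !L3, !L2 by lia. unfold W, rho.
    rewrite !D1_dirD, !D2_dirD by auto.
    unfold k1, dirD. fold p1 p2. fold q11 q22.
    set (y1 := dot3 x xi1). set (y2 := dot3 x xi2).
    set (e := D2 p1 y1 y2 + D1 p2 y1 y2).
    set (dk := p1 y1 y2 * xi1 k + p2 y1 y2 * xi2 k).
    set (dl := p1 y1 y2 * xi1 l + p2 y1 y2 * xi2 l).
    transitivity (phi y1 y2 * xi k * xi l * (q11 y1 y2 * (xi1 0%nat * xi1 0%nat + xi1 1%nat * xi1 1%nat + xi1 2%nat * xi1 2%nat)
       + e * (xi1 0%nat * xi2 0%nat + xi1 1%nat * xi2 1%nat + xi1 2%nat * xi2 2%nat)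
       + q22 y1 y2 * (xi2 0%nat * xi2 0%nat + xi2 1%nat * xi2 1%nat + xi2 2%nat * xi2 2%nat))
       + dk * dl * (xi 0%nat * xi 0%nat + xi 1%nat * xi 1%nat + xi 2%nat * xi 2%nat)).
    - unfold e, dk, dl. ring.
    - rewrite N11, N22, N12, Nxx. unfold dk, dl. ring. }
  assert (EC : C = P3 (fun u v => p1 u v * p1 u v + p2 u v * p2 u v)
      (xi1 0%nat) (xi2 0%nat) (xi1 1%nat) (xi2 1%nat) (xi1 2%nat) (xi2 2%nat)).
  { unfold C. rewrite <- torus_P3. f_equal. apply functional_extensionality; intro x.
    unfold sum3. rewrite !L1 by lia. unfold dirD. fold p1 p2.
    set (y1 := dot3 x xi1). set (y2 := dot3 x xi2).
    transitivity (p1 y1 y2 * p1 y1 y2 * (xi1 0%nat * xi1 0%nat + xi1 1%nat * xi1 1%nat + xi1 2%nat * xi1 2%nat)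
       + 2 * p1 y1 y2 * p2 y1 y2 * (xi1 0%nat * xi2 0%nat + xi1 1%nat * xi2 1%nat + xi1 2%nat * xi2 2%nat)
       + p2 y1 y2 * p2 y1 y2 * (xi2 0%nat * xi2 0%nat + xi2 1%nat * xi2 1%nat + xi2 2%nat * xi2 2%nat)).
    ring. rewrite N11, N22, N12. ring. }
  rewrite EL, torus_P3, EC.
  assert (c0 : cont2 phi) by (apply C1f_c0; auto).
  assert (c1 : cont2 p1) by (apply C1f_c0; auto).
  assert (c2 : cont2 p2) by (apply C1f_c0; auto).
  assert (c11 : cont2 q11) by (apply C1f_c1; auto).
  assert (c22 : cont2 q22) by (apply C1f_c2; auto).
  assert (Pq : forall g, (forall m, (m < 3)%nat -> forall u v, g (u + xi1 m) (v + xi2 m) = g u v) ->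
      forall m, (m < 3)%nat -> forall u v, (fun u v => g u v * D1 g u v) (u + xi1 m) (v + xi2 m) = (fun u v => g u v * D1 g u v) u v).
  { intros g Hg m Hm u v. simpl. rewrite Hg, D1_per; auto. }
  assert (Pq2 : forall g, (forall m, (m < 3)%nat -> forall u v, g (u + xi1 m) (v + xi2 m) = g u v) ->
      forall m, (m < 3)%nat -> forall u v, (fun u v => g u v * D2 g u v) (u + xi1 m) (v + xi2 m) = (fun u v => g u v * D2 g u v) u v).
  { intros g Hg m Hm u v. simpl. rewrite Hg, D2_per; auto. }
  assert (K1 : P3 (D1 (fun u v => phi u v * p1 u v))
      (xi1 0%nat) (xi2 0%nat) (xi1 1%nat) (xi2 1%nat) (xi1 2%nat) (xi2 2%nat) = 0).
  { apply KL_D1; auto. apply C1f_mult; auto.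
    all: try (intros; apply (Pq phi Pp); lia); lra. }
  assert (K2 : P3 (D2 (fun u v => phi u v * p2 u v))
      (xi1 0%nat) (xi2 0%nat) (xi1 1%nat) (xi2 1%nat) (xi1 2%nat) (xi2 2%nat) = 0).
  { apply KL_D2; auto. apply C1f_mult; auto.
    all: try (intros; apply (Pq2 phi Pp); lia); lra. }
  rewrite (P3_ext _ (fun u v => p1 u v * p1 u v + phi u v * q11 u v)) in K1
    by (intros; rewrite D1_mult; auto; fold p1; ring).
  rewrite (P3_ext _ (fun u v => p2 u v * p2 u v + phi u v * q22 u v)) in K2
    by (intros; rewrite D2_mult; auto; fold p2; ring).
  rewrite (P3_ext _ (fun u v => p1 u v * p1 u v + (-1) * (p2 u v * p2 u v))) in R1
    by (intros; ring).
  set (Q := fun f => P3 f (xi1 0%nat) (xi2 0%nat) (xi1 1%nat) (xi2 1%nat) (xi1 2%nat) (xi2 2%nat)).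
  assert (Qp : forall f g, cont2 f -> cont2 g -> Q (fun u v => f u v + g u v) = Q f + Q g).
  { intros; unfold Q; apply P3_plus; auto. }
  assert (Qs : forall f a, cont2 f -> Q (fun u v => a * f u v) = a * Q f).
  { intros; unfold Q; apply P3_scal; auto. }
  change (P3 ?f (xi1 0%nat) (xi2 0%nat) (xi1 1%nat) (xi2 1%nat) (xi1 2%nat) (xi2 2%nat)) with (Q f) in K1, K2, R1, R2 |- *.
  assert (m11 : cont2 (fun u v => p1 u v * p1 u v)) by (apply cont2_mult; auto).
  assert (m22 : cont2 (fun u v => p2 u v * p2 u v)) by (apply cont2_mult; auto).
  assert (m12 : cont2 (fun u v => p1 u v * p2 u v)) by (apply cont2_mult; auto).
  assert (mf1 : cont2 (fun u v => phi u v * q11 u v)) by (apply cont2_mult; auto).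
  assert (mf2 : cont2 (fun u v => phi u v * q22 u v)) by (apply cont2_mult; auto).
  rewrite Qp in K1 by auto. rewrite Qp in K2 by auto.
  rewrite Qp, Qs in R1 by (try apply cont2_scal; auto).

  unfold k1.
  rewrite Qp, Qs by (auto; repeat first [apply cont2_plus | apply cont2_scal]; auto).
  rewrite Qp, Qs by (auto; repeat first [apply cont2_plus | apply cont2_scal]; auto).
  rewrite Qp, Qs by (auto; repeat first [apply cont2_plus | apply cont2_scal]; auto).
  rewrite Qp, Qs, Qs by (auto; repeat first [apply cont2_plus | apply cont2_scal]; auto).
  rewrite Qp by auto.
  set (A := Q (fun u v => p1 u v * p1 u v)) in *.
  set (B := Q (fun u v => p2 u v * p2 u v)) in *.
  set (F1 := Q (fun u v => phi u v * q11 u v)) in *.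
  set (F2 := Q (fun u v => phi u v * q22 u v)) in *.
  set (X := Q (fun u v => p1 u v * p2 u v)) in *.
  assert (EF1 : F1 = - A) by lra. assert (EF2 : F2 = - A) by lra. assert (EB : B = A) by lra.
  rewrite EF1, EF2, EB, R2.
  transitivity ((xi1 k * xi1 l + xi2 k * xi2 l) * A - 2 * (xi k * xi l) * A). ring.
  rewrite Hrow. field.
Qed.
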